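(* Let $\mathcal{B}_4$, $\pi_{\lambda,\mu}$ ($\lambda\neq0,\mu\in\mathbb{R}$), the group Fourier transform and the difference operators $\Delta_{x_i}$ be as in the context. Then for a suitable distribution $\kappa$ on $\mathcal{B}_4$ (e.g. $\kappa\in\mathcal{S}(\mathbb{R}^4)$), $$\Delta_{x_3}\hat\kappa(\pi_{\lambda,\mu})=\frac{i}{\lambda}\Big(\Delta_{x_2}\pi_{\lambda,\mu}(\kappa)\,\pi_{\lambda,\mu}(X_3)+\pi_{\lambda,\mu}(\kappa)\pi_{\lambda,\mu}(X_1)-\pi_{\lambda,\mu}(X_1)\pi_{\lambda,\mu}(\kappa)\Big),$$ where $\pi_{\lambda,\mu}(X_1)=\partial_u$, $\pi_{\lambda,\mu}(X_3)$ is multiplication by $-i\lambda u$, and $\Delta_{x_2}\pi_{\lambda,\mu}(\kappa)=\pi_{\lambda,\mu}(x_2\kappa)=\frac{2\lambda}{i}\partial_\mu\pi_{\lambda,\mu}(\kappa)$.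
   Context: The Engel group $\mathcal{B}_4$ is $\mathbb{R}^4$ with the law $(x_1,x_2,x_3,x_4)\circ(y_1,y_2,y_3,y_4)=(x_1+y_1,x_2+y_2,x_3+y_3-x_1y_2,x_4+y_4+\frac12x_1^2y_2-x_1y_3)$ and Haar measure the Lebesgue measure. Its left-invariant vector fields are $X_1=\partial_{x_1}$, $X_2=\partial_{x_2}-x_1\partial_{x_3}+\frac{x_1^2}{2}\partial_{x_4}$, $X_3=\partial_{x_3}-x_1\partial_{x_4}$, $X_4=\partial_{x_4}$. For $\lambda\neq0$, $\mu\in\mathbb{R}$, $\pi_{\lambda,\mu}(x)h(u)=\exp\big(i(-\frac{\mu}{2\lambda}x_2+\lambda x_4-\lambda x_3u+\frac{\lambda}{2}x_2u^2)\big)h(u+x_1)$ on $L^2(\mathbb{R})$. The group Fourier transform is $\hat\kappa(\pi_{\lambda,\mu})=\pi_{\lambda,\mu}(\kappa)=\int_{\mathcal{B}_4}\kappa(x)\pi_{\lambda,\mu}(x)^*dx$; explicitly $\pi_{\lambda,\mu}(\kappa)h(u)=\int_{\mathbb{R}^4}\kappa(x)\exp\big(i(\frac{\mu}{2\lambda}x_2-\lambda x_4+\lambda x_3(u-x_1)-\frac{\lambda}{2}x_2(u-x_1)^2)\big)h(u-x_1)\,dx$. The same symbol $\pi_{\lambda,\mu}$ denotes the infinitesimal representation: $\pi_{\lambda,\mu}(X_1)=\partial_u$, $\pi_{\lambda,\mu}(X_2)=\frac{i}{2}(\lambda u^2-\frac{\mu}{\lambda})$, $\pi_{\lambda,\mu}(X_3)=-i\lambda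 u$, $\pi_{\lambda,\mu}(X_4)=i\lambda$. The difference operators are defined by $\Delta_{x_i}\hat\kappa(\pi_{\lambda,\mu}):=\pi_{\lambda,\mu}(x_i\kappa)$, $i=1,\dots,4$. *)

(* Defs.v *)
From Stdlib Require Import Reals List.
From Coquelicot Require Import Coquelicot.
Open Scope R_scope.

Definition cexpi (t : R) : C := (cos t, sin t).

(* Functions on B_4 = R^4 are written curried: f x1 x2 x3 x4. *)
Definition fun4 (T : Type) := R -> R -> R -> R -> T.

(* Partial derivative in direction i (0,1,2,3 for x1,x2,x3,x4; larger i are
   treated as x4) of a real-valued function on R^4. *)
Definition pd (i : nat) (g : fun4 R) : fun4 R :=
  fun a b c d =>
    match i with
    | O => Derive (fun t => g t b c d) a
    | 1%nat => Derive (fun t => g a t c d) b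
    | 2%nat => Derive (fun t => g a b t d) c
    | _ => Derive (fun t => g a b c t) d
    end.

Definition ex_pd (i : nat) (g : fun4 R) (a b c d : R) : Prop :=
  match i with
  | O => ex_derive (fun t => g t b c d) a
  | 1%nat => ex_derive (fun t => g a t c d) b
  | 2%nat => ex_derive (fun t => g a b t d) c
  | _ => ex_derive (fun t => g a b c t) d
  end.

Definition iter_pd (ds : list nat) (g : fun4 R) : fun4 R := fold_right pd g ds.

Definition rapid4 (g : fun4 R) : Prop :=
  forall n : nat, exists M : R, forall a b c d : R,
    (1 + a^2 + b^2 + c^2 + d^2) ^ n * Rabs (g a b c d) <= M.

Definition schwartz4_R (g : fun4 R) : Prop :=
  forall ds : list nat,
    (forall i a b c d, ex_pd i (iter_pd ds g) a b c d) /\ rapid4 (iter_pd ds g).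

Definition schwartz4 (k : fun4 C) : Prop :=
  schwartz4_R (fun a b c d => fst (k a b c d)) /\
  schwartz4_R (fun a b c d => snd (k a b c d)).

Definition schwartz1_R (g : R -> R) : Prop :=
  forall n : nat,
    (forall x, ex_derive (Derive_n g n) x) /\
    exists M : R, forall x, (1 + x^2) ^ n * Rabs (Derive_n g n x) <= M.

Definition schwartz1 (h : R -> C) : Prop :=
  schwartz1_R (fun x => fst (h x)) /\ schwartz1_R (fun x => snd (h x)).

Definition Cderiv (f : R -> C) (u : R) : C :=
  (Derive (fun t => fst (f t)) u, Derive (fun t => snd (f t)) u).

Definition int_R (f : R -> C) : C :=
  @RInt_gen C_R_CompleteNormedModule f (Rbar_locally m_infty) (Rbar_locally p_infty).

(* group Fourier transform pi_{lam,mu}(kappa), acting on h : R -> C: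
   pi(kappa)h(u) = int_{R^4} kappa(x) exp(i(mu/(2lam) x2 - lam x4
                    + lam x3 (u-x1) - lam/2 x2 (u-x1)^2)) h(u-x1) dx *)
Definition piF (lam mu : R) (k : fun4 C) (h : R -> C) (u : R) : C :=
  int_R (fun x1 => int_R (fun x2 => int_R (fun x3 => int_R (fun x4 =>
    Cmult (Cmult (k x1 x2 x3 x4)
      (cexpi (mu / (2 * lam) * x2 - lam * x4 + lam * x3 * (u - x1)
              - lam / 2 * x2 * (u - x1) ^ 2)))
      (h (u - x1)))))).

Definition mulx (i : nat) (k : fun4 C) : fun4 C :=
  fun a b c d =>
    Cmult (RtoC (match i with 1%nat => a | 2%nat => b | 3%nat => c | _ => d end))
          (k a b c d).

Definition DeltaX (i : nat) (lam mu : R) (k : fun4 C) : (R -> C) -> (R -> C) :=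
  piF lam mu (mulx i k).

Definition piX1 (h : R -> C) : R -> C := Cderiv h.
Definition piX3 (lam : R) (h : R -> C) : R -> C :=
  fun u => Cmult (0, - lam * u) (h u).

(* Main.v *)
Require Import Defs.
From Stdlib Require Import Reals List.
From Coquelicot Require Import Coquelicot.
From Stdlib Require Import Lra Lia FunctionalExtensionality.
Open Scope R_scope.

Definition w (x : R) : R := / (1 + x²).

Lemma w_pos x : 0 < w x.
Proof. unfold w. apply Rinv_0_lt_compat. pose proof (Rle_0_sqr x). lra. Qed.

Lemma w_le1 x : w x <= 1.
Proof. unfold w. rewrite <- Rinv_1. apply Rinv_le_contravar; try lra.
  pose proof (Rle_0_sqr x). lra. Qed.

Lemma atan_tail eps : 0 < eps -> exists A, 0 < A /\ PI / 2 - atan A < eps.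
Proof.
  intros He. set (e := Rmin (eps/2) (PI/4)).
  assert (HPI := PI_RGT_0).
  assert (He0 : 0 < e) by (unfold e; apply Rmin_glb_lt; lra).
  assert (He1 : e < PI/2) by (unfold e; pose proof (Rmin_r (eps/2) (PI/4)); lra).
  assert (Ht := tan_gt_0 e He0 He1).
  exists (/ tan e). split. apply Rinv_0_lt_compat; auto.
  assert (atan (/ / tan e) = PI/2 - atan (/ tan e)).
  { apply atan_inv. apply Rinv_0_lt_compat; auto. }
  rewrite Rinv_inv in H. rewrite atan_tan in H by lra.
  assert (e <= eps/2) by apply Rmin_l. lra.
Qed.

Lemma is_RInt_w (B a b : R) :
  is_RInt (fun x => B * w x) a b (B * atan b - B * atan a).
Proof.
  apply (is_RInt_derive (fun x => B * atan x)).
  - intros x _. unfold w. auto_derive. auto. unfold Rsqr. rewrite Rmult_1_l, Rmult_1_r. reflexivity.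
  - intros x _. unfold w. apply (ex_derive_continuous (K := R_AbsRing) (V := R_NormedModule) (fun x => B * / (1 + x²))). auto_derive.
    pose proof (Rle_0_sqr x). unfold Rsqr in *. nra.
Qed.

Lemma ab1 {G : AbelianGroup} (x y z : G) : minus (plus x (plus y z)) y = plus x z.
Proof. transitivity (plus (plus x z) (plus y (opp y))).
  - unfold minus. rewrite (plus_comm y z), (plus_assoc x z y). apply eq_sym, plus_assoc.
  - rewrite plus_opp_r. apply plus_zero_r. Qed.
Lemma ab2 {G : AbelianGroup} (x y : G) : x = minus y (minus y x).
Proof. unfold minus. transitivity (plus (plus y (opp y)) x).
  rewrite plus_opp_r. rewrite plus_zero_l. auto. 
  transitivity (plus y (plus (opp y) x)). apply eq_sym, plus_assoc.
  f_equal. rewrite <- (opp_opp x) at 1. rewrite <- opp_plus. auto. Qed.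

Lemma norm_minus_sym {K : AbsRing} {V : NormedModule K} (x y : V) :
  norm (minus x y) = norm (minus y x).
Proof.
  rewrite <- (norm_opp (minus x y)). f_equal. apply opp_minus.
Qed.

Lemma norm_le_minus {K : AbsRing} {V : NormedModule K} (x y : V) :
  norm x <= norm y + norm (minus y x).
Proof. rewrite norm_minus_sym.
  pose proof (norm_triangle y (minus x y)).
  assert (plus y (minus x y) = x).
  { unfold minus. rewrite plus_comm. transitivity (plus x (plus (opp y) y)).
    apply eq_sym, plus_assoc. rewrite plus_opp_l. apply plus_zero_r. }
  rewrite H0 in H. auto.
Qed.

Section Int1.
Context {V : CompleteNormedModule R_AbsRing}.

Lemma RInt_bound_w (phi : R -> V) B a b :
  (forall t, continuous phi t) -> (forall t, norm (phi t) <= B * w t) ->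
  a <= b -> norm (RInt phi a b) <= B * atan b - B * atan a.
Proof.
  intros Hc Hb Hab.
  apply (norm_RInt_le phi (fun x => B * w x) a b); auto.
  apply RInt_correct. apply ex_RInt_continuous. intros; auto.
  apply is_RInt_w.
Qed.

Definition FP := filter_prod (Rbar_locally m_infty) (Rbar_locally p_infty).

Lemma int1 (phi : R -> V) (B : R) :
  (forall t, continuous phi t) -> (forall t, norm (phi t) <= B * w t) ->
  exists l, is_RInt_gen phi (Rbar_locally m_infty) (Rbar_locally p_infty) l
            /\ norm l <= PI * B.
Proof.
  intros Hc Hb.
  assert (HB : 0 <= B).
  { pose proof (Hb 0). pose proof (norm_ge_0 (phi 0)). pose proof (w_pos 0).
    destruct (Rle_or_lt 0 B); auto. nra. }
  assert (Hex : forall a b, ex_RInt phi a b).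
  { intros. apply ex_RInt_continuous. intros; auto. }
  set (F := filtermap (fun ab : R * R => RInt phi (fst ab) (snd ab)) FP).
  assert (FPp : ProperFilter FP).
  { apply filter_prod_proper; apply Rbar_locally_filter. }
  assert (Fp : ProperFilter F) by (apply filtermap_proper_filter; auto).
  assert (Hcau : cauchy F).
  { intros eps.
    destruct (atan_tail (eps / (2 * (B + 1)))) as [A [HA HA2]].
    { apply Rdiv_lt_0_compat. apply eps. lra. }
    exists (RInt phi (-A) A).
    unfold F, filtermap, FP.
    apply (Filter_prod _ _ _ (fun a => a < -A) (fun b => A < b)).
    - exists (-A). auto.
    - exists A. auto.
    - intros a b Ha Hb'. simpl. apply (@norm_compat1 R_AbsRing V).
      rewrite <- (RInt_Chasles phi a (-A) b) by auto.
      rewrite <- (RInt_Chasles phi (-A) A b) by auto.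
      rewrite (ab1 (G := NormedModule.AbelianGroup R_AbsRing V)).
      eapply Rle_lt_trans. apply norm_triangle.
      pose proof (RInt_bound_w phi B a (-A) Hc Hb ltac:(lra)).
      pose proof (RInt_bound_w phi B A b Hc Hb ltac:(lra)).
      rewrite atan_opp in H.
      pose proof (atan_bound a). pose proof (atan_bound b).
      assert (B * (PI/2 - atan A) * 2 < eps).
      { apply Rmult_lt_compat_l with (r := 2 * (B+1)) in HA2; [|lra].
        field_simplify in HA2; [|lra]. pose proof (cond_pos eps).
        assert (0 <= PI/2 - atan A) by (pose proof (atan_bound A); lra). nra. }
      nra. }
  exists (lim F). split.
  - intros P [eps HP].
    pose proof (complete_cauchy F Fp Hcau eps) as H.
    unfold F, filtermap in H. unfold filtermapi.
    eapply filter_imp; [|exact H].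
    intros [a b] Hab. exists (RInt phi a b). split.
    apply RInt_correct; auto. apply HP; auto.
  - destruct (Rle_or_lt (norm (lim F)) (PI * B)) as [|Hlt]; auto. exfalso.
    assert (Hnf := norm_factor_gt_0 (K := R_AbsRing) (V := V)).
    assert (Hep : 0 < (norm (lim F) - PI * B) / norm_factor) by
      (apply Rdiv_lt_0_compat; [lra | exact Hnf]).
    pose proof (complete_cauchy F Fp Hcau (mkposreal _ Hep)) as H.
    assert (H2 : FP (fun ab => fst ab < snd ab)).
    { apply (Filter_prod _ _ _ (fun a => a < 0) (fun b => 0 < b)).
      exists 0; auto. exists 0; auto. simpl; intros; lra. }
    assert (H' : FP (fun ab => ball (lim F) (mkposreal _ Hep) (RInt phi (fst ab) (snd ab)))) by exact H.
    destruct (filter_ex _ (filter_and _ _ H' H2)) as [[a b] [H3 H4]].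
    simpl in H3, H4.
    apply (@norm_compat2 R_AbsRing V (lim F) (RInt phi a b) (mkposreal _ Hep)) in H3. simpl in H3.
    replace (norm_factor * ((norm (lim F) - PI * B) / norm_factor)) with (norm (lim F) - PI * B) in H3
      by (field; apply Rgt_not_eq; exact Hnf).
    pose proof (RInt_bound_w phi B a b Hc Hb ltac:(lra)).
    pose proof (atan_bound a). pose proof (atan_bound b).
    pose proof (norm_le_minus (lim F) (RInt phi a b)).
    nra.
Qed.
End Int1.


Definition RIg {V : CompleteNormedModule R_AbsRing} (phi : R -> V) : V :=
  RInt_gen phi (Rbar_locally m_infty) (Rbar_locally p_infty).

Lemma RIg_eq {V : CompleteNormedModule R_AbsRing} (phi : R -> V) l :
  is_RInt_gen phi (Rbar_locally m_infty) (Rbar_locally p_infty) l -> RIg phi = l.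
Proof. intros H. unfold RIg. apply is_RInt_gen_unique; auto; apply Rbar_locally_filter. Qed.

Lemma lip_cont {V : NormedModule R_AbsRing} (phi : R -> V) (L : R) t :
  (forall s, Rabs (s - t) <= 1 -> norm (minus (phi s) (phi t)) <= L * Rabs (s - t)) ->
  continuous phi t.
Proof.
  intros H. apply filterlim_locally. intros eps.
  assert (HL : 0 < Rabs L + 1) by (pose proof (Rabs_pos L); lra).
  assert (Hd : 0 < Rmin 1 (eps / (Rabs L + 1))).
  { apply Rmin_glb_lt. lra. apply Rdiv_lt_0_compat; auto. apply eps. }
  exists (mkposreal _ Hd). intros s Hs.
  apply norm_compat1.
  change (ball t (Rmin 1 (eps / (Rabs L + 1))) s) in Hs.
  unfold ball in Hs; simpl in Hs; unfold AbsRing_ball, abs, minus, plus, opp in Hs; simpl in Hs.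
  assert (Hs1 : Rabs (s - t) < 1) by (pose proof (Rmin_l 1 (eps / (Rabs L + 1))); unfold Rminus; lra).
  assert (Hs2 : Rabs (s - t) < eps / (Rabs L + 1)) by (pose proof (Rmin_r 1 (eps / (Rabs L + 1))); unfold Rminus; lra).
  pose proof (H s ltac:(lra)).
  apply Rmult_lt_compat_r with (r := Rabs L + 1) in Hs2; auto.
  unfold Rdiv in Hs2. rewrite Rmult_assoc, Rinv_l, Rmult_1_r in Hs2 by lra.
  pose proof (Rabs_pos (s - t)). pose proof (Rle_abs L).
  assert (L * Rabs (s - t) <= Rabs L * Rabs (s-t)) by nra.
  nra.
Qed.

Lemma int2 {V : CompleteNormedModule R_AbsRing} (p1 p2 : R -> V) (B1 B2 D : R) :
  (forall t, continuous p1 t) -> (forall t, continuous p2 t) ->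
  (forall t, norm (p1 t) <= B1 * w t) -> (forall t, norm (p2 t) <= B2 * w t) ->
  (forall t, norm (minus (p1 t) (p2 t)) <= D * w t) ->
  norm (minus (RIg p1) (RIg p2)) <= PI * D.
Proof.
  intros c1 c2 b1 b2 d.
  destruct (int1 p1 B1 c1 b1) as [l1 [H1 _]].
  destruct (int1 p2 B2 c2 b2) as [l2 [H2 _]].
  destruct (int1 (fun t => minus (p1 t) (p2 t)) D) as [l3 [H3 H3']]; auto.
  { intros t. apply (continuous_minus p1 p2); auto. }
  rewrite (RIg_eq _ _ H1), (RIg_eq _ _ H2).
  pose proof (is_RInt_gen_minus (Fa := Rbar_locally m_infty) (Fb := Rbar_locally p_infty) p1 p2 l1 l2 H1 H2) as H.
  assert (E : RIg (fun t => minus (p1 t) (p2 t)) = minus l1 l2) by (apply RIg_eq; exact H).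
  assert (E2 : norm (RIg (fun t => minus (p1 t) (p2 t))) <= PI * D) by (rewrite (RIg_eq _ _ H3); exact H3').
  rewrite E in E2. exact E2.
Qed.

Definition pt := nat -> R.
Definition upd (x : pt) (k : nat) (t : R) : pt := fun j => if Nat.eqb j k then t else x j.
Definition bv := nat -> bool.
Definition bupd (b : bv) (k : nat) (v : bool) : bv := fun j => if Nat.eqb j k then v else b j.
Definition wt (c : bool) (t : R) := if c then w t else 1.
Definition Wb (b : bv) (x : pt) := wt (b 0%nat) (x 0%nat) * wt (b 1%nat) (x 1%nat) * wt (b 2%nat) (x 2%nat) * wt (b 3%nat) (x 3%nat).

Lemma wt_pos c t : 0 < wt c t.
Proof. destruct c; simpl. apply w_pos. lra. Qed.
Lemma wt_le1 c t : wt c t <= 1.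
Proof. destruct c; simpl. apply w_le1. lra. Qed.
Lemma Wb_pos b x : 0 < Wb b x.
Proof. unfold Wb. repeat apply Rmult_lt_0_compat; apply wt_pos. Qed.
Lemma Wb_le1 b x : Wb b x <= 1.
Proof. unfold Wb.
  pose proof (wt_pos (b 0%nat) (x 0%nat)); pose proof (wt_pos (b 1%nat) (x 1%nat));
  pose proof (wt_pos (b 2%nat) (x 2%nat)); pose proof (wt_pos (b 3%nat) (x 3%nat));
  pose proof (wt_le1 (b 0%nat) (x 0%nat)); pose proof (wt_le1 (b 1%nat) (x 1%nat));
  pose proof (wt_le1 (b 2%nat) (x 2%nat)); pose proof (wt_le1 (b 3%nat) (x 3%nat)).
  rewrite <- (Rmult_1_l 1) at 1. rewrite <- (Rmult_1_l 1) at 1. rewrite <- (Rmult_1_l 1) at 1.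
  repeat (apply Rmult_le_compat; try (apply Rlt_le; repeat apply Rmult_lt_0_compat; apply wt_pos); try lra; auto).
Qed.

Lemma Wb_upd b x k t : (k < 4)%nat -> b k = true ->
  Wb b (upd x k t) = w t * Wb (bupd b k false) x.
Proof.
  intros Hk Hb. destruct k as [|[|[|[|k]]]]; try lia;
  unfold Wb, upd, bupd; simpl; rewrite Hb; simpl; ring.
Qed.

Lemma Wb_bupd_le b x i : Wb b x <= Wb (bupd b i false) x.
Proof.
  unfold Wb, bupd.
  assert (forall c t, wt c t <= wt false t) by (intros; destruct c; simpl; [apply w_le1|lra]).
  pose proof (wt_pos (b 0%nat) (x 0%nat)); pose proof (wt_pos (b 1%nat) (x 1%nat));
  pose proof (wt_pos (b 2%nat) (x 2%nat)); pose proof (wt_pos (b 3%nat) (x 3%nat)).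
  destruct (Nat.eqb 0 i), (Nat.eqb 1 i), (Nat.eqb 2 i), (Nat.eqb 3 i);
  repeat (apply Rmult_le_compat; try (apply Rlt_le; repeat apply Rmult_lt_0_compat; apply wt_pos); try lra; auto).
Qed.

Lemma upd_upd_same x k s t : upd (upd x k s) k t = upd x k t.
Proof. apply functional_extensionality; intros j. unfold upd. destruct (Nat.eqb j k); auto. Qed.
Lemma upd_comm x i k s t : i <> k -> upd (upd x i s) k t = upd (upd x k t) i s.
Proof. intros H. apply functional_extensionality; intros j. unfold upd.
  destruct (Nat.eqb_spec j k), (Nat.eqb_spec j i); subst; auto. congruence. Qed.
Lemma upd_at x k t : upd x k t k = t.
Proof. unfold upd. rewrite Nat.eqb_refl. auto. Qed.
Lemma upd_ne x k t j : j <> k -> upd x k t j = x j.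
Proof. intros H. unfold upd. destruct (Nat.eqb_spec j k); congruence. Qed.
Lemma upd_id x k : upd x k (x k) = x.
Proof. apply functional_extensionality; intros j. unfold upd. destruct (Nat.eqb_spec j k); subst; auto. Qed.
Lemma bupd_comm b i k v v' : i <> k -> bupd (bupd b i v) k v' = bupd (bupd b k v') i v.
Proof. intros H. apply functional_extensionality; intros j. unfold bupd.
  destruct (Nat.eqb_spec j k), (Nat.eqb_spec j i); subst; auto. congruence. Qed.
Lemma bupd_ne b k v j : j <> k -> bupd b k v j = b j.
Proof. intros H. unfold bupd. destruct (Nat.eqb_spec j k); congruence. Qed.
Lemma bupd_same b k v v' : bupd (bupd b k v) k v' = bupd b k v'.
Proof. apply functional_extensionality; intros j. unfold bupd. destruct (Nat.eqb j k); auto. Qed.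

Lemma norm_minus_self {K : AbsRing} {V : NormedModule K} (a : V) : norm (minus a a) = 0.
Proof. rewrite minus_eq_zero. apply norm_zero. Qed.

Section Good.
Context {V : CompleteNormedModule R_AbsRing}.

Definition Good (M : R) (b : bv) (g : pt -> V) :=
  (forall x, norm (g x) <= M * Wb b x) /\
  (forall x i y, (i < 4)%nat -> Rabs (x i - y) <= 1 ->
     norm (minus (g x) (g (upd x i y))) <= M * Rabs (x i - y) * Wb (bupd b i false) x).

Definition J (k : nat) (g : pt -> V) : pt -> V := fun x => RIg (fun t => g (upd x k t)).

Lemma Good_M M b g : Good M b g -> 0 <= M.
Proof. intros [H _]. pose proof (H (fun _ => 0)). pose proof (norm_ge_0 (g (fun _ => 0))).
  pose proof (Wb_pos b (fun _ => 0)). destruct (Rle_or_lt 0 M); auto. nra. Qed.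

Lemma Good_cont M b g x k : (k < 4)%nat -> Good M b g -> forall t, continuous (fun t => g (upd x k t)) t.
Proof.
  intros Hk HG t. pose proof (Good_M _ _ _ HG) as HM. destruct HG as [_ HL].
  apply (lip_cont (V := V) (fun t => g (upd x k t)) M). intros s Hs.
  pose proof (HL (upd x k s) k t Hk) as H. rewrite upd_at, upd_upd_same in H.
  specialize (H Hs). eapply Rle_trans; [exact H|].
  rewrite <- (Rmult_1_r (M * Rabs (s - t))) at 2. apply Rmult_le_compat_l.
  apply Rmult_le_pos; auto; apply Rabs_pos. apply Wb_le1.
Qed.

Lemma Good_J M b g k : (k < 4)%nat -> b k = true -> Good M b g ->
  Good (PI * M) (bupd b k false) (J k g).
Proof.
  intros Hk Hb HG. pose proof (Good_M _ _ _ HG) as HM.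
  pose proof HG as [HB HL].
  split.
  - intros x. unfold J.
    destruct (int1 (fun t => g (upd x k t)) (M * Wb (bupd b k false) x)) as [l [Hl Hl']].
    + apply (Good_cont M b); auto.
    + intros t. replace (M * Wb (bupd b k false) x * w t) with (M * Wb b (upd x k t))
        by (rewrite Wb_upd; auto; ring). apply HB.
    + rewrite (RIg_eq _ _ Hl). rewrite Rmult_assoc. auto.
  - intros x i y Hi Hy. unfold J.
    destruct (Nat.eq_dec i k) as [->|Hik].
    + rewrite (functional_extensionality (fun t => g (upd (upd x k y) k t)) (fun t => g (upd x k t)))
        by (intros t; rewrite upd_upd_same; auto).
      eapply Rle_trans; [right; apply (norm_minus_self (V := CompleteNormedModule.NormedModule R_AbsRing V))|]. rewrite bupd_same.
      pose proof (Rabs_pos (x k - y)). pose proof (Wb_pos (bupd b k false) x).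
      apply Rmult_le_pos; [|lra]. apply Rmult_le_pos; [|lra]. pose proof PI_RGT_0. nra.
    + replace (PI * M * Rabs (x i - y) * Wb (bupd (bupd b k false) i false) x) with
        (PI * (M * Rabs (x i - y) * Wb (bupd (bupd b k false) i false) x)) by ring.
      apply (int2 _ _ (M * Wb (bupd b k false) x) (M * Wb (bupd b k false) (upd x i y))).
      * apply (Good_cont M b); auto.
      * apply (Good_cont M b); auto.
      * intros t. replace (M * Wb (bupd b k false) x * w t) with (M * Wb b (upd x k t))
          by (rewrite Wb_upd; auto; ring). apply HB.
      * intros t. replace (M * Wb (bupd b k false) (upd x i y) * w t) with (M * Wb b (upd (upd x i y) k t))
          by (rewrite Wb_upd; auto; ring). apply HB.
      * intros t. rewrite (upd_comm x i k y t Hik).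
        pose proof (HL (upd x k t) i y Hi) as H. rewrite upd_ne in H by auto.
        specialize (H Hy). eapply Rle_trans; [exact H|].
        rewrite Wb_upd; auto.
        2:{ rewrite bupd_ne; auto. }
        rewrite bupd_comm by auto. right. ring.
Qed.
End Good.


Section GP.
Context {V : CompleteNormedModule R_AbsRing}.

Definition rem (a b c : V) (d : R) : V := minus (minus a b) (scal d c).

Definition GoodP (M : R) (b : bv) (g g' : R -> pt -> V) (p0 : R) :=
  (forall p, Rabs (p - p0) < 1 -> Good M b (g p) /\ Good M b (g' p)) /\
  (forall p q x, Rabs (p - p0) < 1 -> Rabs (q - p0) < 1 ->
     norm (rem (g p x) (g q x) (g' q x) (p - q)) <= M * (p - q)^2 * Wb b x).

Lemma RIg_rem (f1 f2 f3 : R -> V) (d B1 B2 B3 : R) :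
  (forall t, continuous f1 t) -> (forall t, continuous f2 t) -> (forall t, continuous f3 t) ->
  (forall t, norm (f1 t) <= B1 * w t) -> (forall t, norm (f2 t) <= B2 * w t) ->
  (forall t, norm (f3 t) <= B3 * w t) ->
  RIg (fun t => rem (f1 t) (f2 t) (f3 t) d) = rem (RIg f1) (RIg f2) (RIg f3) d.
Proof.
  intros c1 c2 c3 b1 b2 b3.
  destruct (int1 f1 B1 c1 b1) as [l1 [H1 _]].
  destruct (int1 f2 B2 c2 b2) as [l2 [H2 _]].
  destruct (int1 f3 B3 c3 b3) as [l3 [H3 _]].
  rewrite (RIg_eq _ _ H1), (RIg_eq _ _ H2), (RIg_eq _ _ H3).
  apply RIg_eq.
  pose proof (is_RInt_gen_minus (Fa := Rbar_locally m_infty) (Fb := Rbar_locally p_infty) f1 f2 l1 l2 H1 H2) as H12.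
  pose proof (is_RInt_gen_scal (Fa := Rbar_locally m_infty) (Fb := Rbar_locally p_infty) f3 d l3 H3) as H3'.
  pose proof (is_RInt_gen_minus (Fa := Rbar_locally m_infty) (Fb := Rbar_locally p_infty) _ _ _ _ H12 H3') as H.
  exact H.
Qed.

Lemma GoodP_J M b g g' p0 k : (k < 4)%nat -> b k = true -> GoodP M b g g' p0 ->
  GoodP (PI * M) (bupd b k false) (fun p => J k (g p)) (fun p => J k (g' p)) p0.
Proof.
  intros Hk Hb [HG HR]. split.
  - intros p Hp. destruct (HG p Hp). split; apply Good_J; auto.
  - intros p q x Hp Hq. unfold J.
    destruct (HG p Hp) as [Gp _]. destruct (HG q Hq) as [Gq G'q].
    pose proof (Good_M _ _ _ Gp) as HM.
    pose proof (proj1 Gp) as Bp. pose proof (proj1 Gq) as Bq. pose proof (proj1 G'q) as B'q.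
    rewrite <- (RIg_rem _ _ _ (p - q) (M * Wb (bupd b k false) x) (M * Wb (bupd b k false) x) (M * Wb (bupd b k false) x)).
    + destruct (int1 (fun t => rem (g p (upd x k t)) (g q (upd x k t)) (g' q (upd x k t)) (p - q))
          (M * (p - q) ^ 2 * Wb (bupd b k false) x)) as [l [Hl Hl']].
      * intros t. unfold rem.
        apply (continuous_minus (V := V)). apply (continuous_minus (V := V)).
        apply (Good_cont M b); auto. apply (Good_cont M b); auto.
        apply (continuous_scal_r (V := V)). apply (Good_cont M b); auto.
      * intros t. eapply Rle_trans. apply HR; auto. rewrite Wb_upd; auto. right; ring.
      * rewrite (RIg_eq _ _ Hl). eapply Rle_trans. exact Hl'. right; ring.
    + intros t; apply (Good_cont M b); auto.
    + intros t; apply (Good_cont M b); auto.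
    + intros t; apply (Good_cont M b); auto.
    + intros t. rewrite Rmult_assoc, (Rmult_comm _ (w t)), <- Wb_upd; auto.
    + intros t. rewrite Rmult_assoc, (Rmult_comm _ (w t)), <- Wb_upd; auto.
    + intros t. rewrite Rmult_assoc, (Rmult_comm _ (w t)), <- Wb_upd; auto.
Qed.

Lemma J_plus M1 M2 b (f g : pt -> V) k : (k < 4)%nat -> b k = true -> Good M1 b f -> Good M2 b g ->
  J k (fun x => plus (f x) (g x)) = fun x => plus (J k f x) (J k g x).
Proof.
  intros Hk Hb Gf Gg. apply functional_extensionality; intros x. unfold J.
  destruct (int1 (fun t => f (upd x k t)) (M1 * Wb (bupd b k false) x)) as [l1 [H1 _]].
  { apply (Good_cont M1 b); auto. }
  { intros t. rewrite Rmult_assoc, (Rmult_comm _ (w t)), <- Wb_upd; auto. apply Gf. }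
  destruct (int1 (fun t => g (upd x k t)) (M2 * Wb (bupd b k false) x)) as [l2 [H2 _]].
  { apply (Good_cont M2 b); auto. }
  { intros t. rewrite Rmult_assoc, (Rmult_comm _ (w t)), <- Wb_upd; auto. apply Gg. }
  rewrite (RIg_eq _ _ H1), (RIg_eq _ _ H2). apply RIg_eq.
  pose proof (is_RInt_gen_plus (Fa := Rbar_locally m_infty) (Fb := Rbar_locally p_infty) _ _ _ _ H1 H2) as H.
  exact H.
Qed.

End GP.

Lemma deriv_from_rem (f f' : R -> R) p0 M :
  (forall p, Rabs (p - p0) < 1 -> Rabs (f p - f p0 - (p - p0) * f' p0) <= M * (p - p0) ^ 2) ->
  is_derive f p0 (f' p0).
Proof.
  intros H. apply is_derive_Reals. intros eps Heps.
  assert (HM : 0 < Rabs M + 1) by (pose proof (Rabs_pos M); lra).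
  assert (Hd : 0 < Rmin 1 (eps / (Rabs M + 1))).
  { apply Rmin_glb_lt. lra. apply Rdiv_lt_0_compat; auto. }
  exists (mkposreal _ Hd). intros hh Hh0 Hh. simpl in Hh.
  assert (Hh1 : Rabs hh < 1) by (pose proof (Rmin_l 1 (eps / (Rabs M + 1))); lra).
  assert (Hh2 : Rabs hh < eps / (Rabs M + 1)) by (pose proof (Rmin_r 1 (eps / (Rabs M + 1))); lra).
  specialize (H (p0 + hh)). replace (p0 + hh - p0) with hh in H by ring.
  specialize (H Hh1).
  replace ((f (p0 + hh) - f p0) / hh - f' p0) with ((f (p0 + hh) - f p0 - hh * f' p0) / hh) by (field; auto).
  unfold Rdiv. rewrite Rabs_mult, Rabs_inv.
  assert (Hpos : 0 < Rabs hh) by (apply Rabs_pos_lt; auto).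
  apply Rmult_lt_reg_r with (r := Rabs hh); auto.
  rewrite Rmult_assoc, Rinv_l, Rmult_1_r by lra.
  eapply Rle_lt_trans. exact H.
  rewrite <- (pow2_abs hh).
  apply Rmult_lt_compat_r with (r := Rabs M + 1) in Hh2; auto.
  unfold Rdiv in Hh2. rewrite Rmult_assoc, Rinv_l, Rmult_1_r in Hh2 by lra.
  pose proof (Rle_abs M). nra.
Qed.


Definition FA := Rbar_locally m_infty.
Definition FB := Rbar_locally p_infty.

Lemma isg_fst (f : R -> C) (l : C) :
  is_RInt_gen (V := C_R_NormedModule) f FA FB l ->
  is_RInt_gen (V := R_NormedModule) (fun t => fst (f t)) FA FB (fst l).
Proof.
  intros H P [eps HP].
  assert (HQ : locally (T := C_UniformSpace) l (fun z : C => ball (fst l) eps (fst z))).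
  { exists eps. intros z [Hz _]. exact Hz. }
  specialize (H _ HQ).
  unfold filtermapi in *. eapply filter_imp; [|exact H].
  intros [a b] [y [Hy1 Hy2]]. exists (fst y). split.
  - apply (is_RInt_fct_extend_fst (U := R_NormedModule) (V := R_NormedModule) f a b y Hy1).
  - apply HP. exact Hy2.
Qed.

Lemma isg_snd (f : R -> C) (l : C) :
  is_RInt_gen (V := C_R_NormedModule) f FA FB l ->
  is_RInt_gen (V := R_NormedModule) (fun t => snd (f t)) FA FB (snd l).
Proof.
  intros H P [eps HP].
  assert (HQ : locally (T := C_UniformSpace) l (fun z : C => ball (snd l) eps (snd z))).
  { exists eps. intros z [_ Hz]. exact Hz. }
  specialize (H _ HQ).
  unfold filtermapi in *. eapply filter_imp; [|exact H].
  intros [a b] [y [Hy1 Hy2]]. exists (snd y). split.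
  - apply (is_RInt_fct_extend_snd (U := R_NormedModule) (V := R_NormedModule) f a b y Hy1).
  - apply HP. exact Hy2.
Qed.

Lemma isg_pair (f : R -> C) (l1 l2 : R) :
  is_RInt_gen (V := R_NormedModule) (fun t => fst (f t)) FA FB l1 ->
  is_RInt_gen (V := R_NormedModule) (fun t => snd (f t)) FA FB l2 ->
  is_RInt_gen (V := C_R_NormedModule) f FA FB (l1, l2).
Proof.
  intros H1 H2 P [eps HP].
  assert (Q1 : locally l1 (ball l1 eps)) by (exists eps; auto).
  assert (Q2 : locally l2 (ball l2 eps)) by (exists eps; auto).
  specialize (H1 _ Q1). specialize (H2 _ Q2).
  unfold filtermapi in *.
  assert (FF : Filter (filter_prod FA FB)).
  { apply filter_prod_filter; apply Rbar_locally_filter. }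
  eapply filter_imp; [|exact (filter_and _ _ H1 H2)].
  intros [a b] [[y1 [Hy1 Hy1']] [y2 [Hy2 Hy2']]].
  exists (y1, y2). split.
  - apply (is_RInt_fct_extend_pair (U := R_NormedModule) (V := R_NormedModule) f a b y1 y2 Hy1 Hy2).
  - apply HP. split; auto.
Qed.

Lemma isg_cmult (f : R -> C) (l c : C) :
  is_RInt_gen (V := C_R_NormedModule) f FA FB l ->
  is_RInt_gen (V := C_R_NormedModule) (fun t => Cmult c (f t)) FA FB (Cmult c l).
Proof.
  intros H. pose proof (isg_fst _ _ H) as H1. pose proof (isg_snd _ _ H) as H2.
  assert (FFa : Filter FA) by apply Rbar_locally_filter.
  assert (FFb : Filter FB) by apply Rbar_locally_filter.
  destruct c as [c1 c2]. destruct l as [l1 l2].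
  apply isg_pair.
  - pose proof (is_RInt_gen_minus _ _ _ _ (is_RInt_gen_scal _ c1 _ H1) (is_RInt_gen_scal _ c2 _ H2)) as H3.
    exact H3.
  - pose proof (is_RInt_gen_plus _ _ _ _ (is_RInt_gen_scal _ c1 _ H2) (is_RInt_gen_scal _ c2 _ H1)) as H3.
    exact H3.
Qed.

Lemma J_cmult M b (f : pt -> C) k c : (k < 4)%nat -> b k = true ->
  Good (V := C_R_CompleteNormedModule) M b f ->
  J (V := C_R_CompleteNormedModule) k (fun x => Cmult c (f x)) = fun x => Cmult c (J (V := C_R_CompleteNormedModule) k f x).
Proof.
  intros Hk Hb Gf. apply functional_extensionality; intros x. unfold J.
  destruct (int1 (V := C_R_CompleteNormedModule) (fun t => f (upd x k t)) (M * Wb (bupd b k false) x)) as [l1 [H1 _]].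
  { apply (Good_cont M b); auto. }
  { intros t. rewrite Rmult_assoc, (Rmult_comm _ (w t)), <- Wb_upd; auto. apply Gf. }
  rewrite (RIg_eq _ _ H1). apply RIg_eq.
  exact (isg_cmult _ _ c H1).
Qed.


Definition Q (x : pt) : R := 1 + x 0%nat ^ 2 + x 1%nat ^ 2 + x 2%nat ^ 2 + x 3%nat ^ 2.

Lemma Q_ge1 x : 1 <= Q x.
Proof. unfold Q. pose proof (pow2_ge_0 (x 0%nat)). pose proof (pow2_ge_0 (x 1%nat)).
  pose proof (pow2_ge_0 (x 2%nat)). pose proof (pow2_ge_0 (x 3%nat)). lra. Qed.

Lemma Qn_ge1 x n : 1 <= Q x ^ n.
Proof. induction n; simpl. lra. pose proof (Q_ge1 x). nra. Qed.

Lemma Qn_pos x n : 0 < Q x ^ n.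
Proof. pose proof (Qn_ge1 x n). lra. Qed.

Lemma Qn_mono x n m : (n <= m)%nat -> Q x ^ n <= Q x ^ m.
Proof. intros H. apply Rle_pow; auto. apply Q_ge1. Qed.

Lemma Q_upd x i y : (i < 4)%nat -> Rabs (x i - y) <= 1 -> Q (upd x i y) <= 3 * Q x.
Proof.
  intros Hi Hy. assert (y ^ 2 <= 2 * x i ^ 2 + 2).
  { assert (-1 <= x i - y <= 1) by (unfold Rabs in Hy; destruct (Rcase_abs (x i - y)); lra).
    assert (0 <= (1 - (x i - y)) * (1 + (x i - y))) by (apply Rmult_le_pos; lra).
    pose proof (pow2_ge_0 (x i + (x i - y))). simpl in *. nra. }
  pose proof (pow2_ge_0 (x 0%nat)). pose proof (pow2_ge_0 (x 1%nat)).
  pose proof (pow2_ge_0 (x 2%nat)). pose proof (pow2_ge_0 (x 3%nat)).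
  destruct i as [|[|[|[|i]]]]; try lia; unfold Q, upd; simpl in *; lra.
Qed.

Lemma Q_upd' x i y : (i < 4)%nat -> Rabs (x i - y) <= 1 -> Q x <= 3 * Q (upd x i y).
Proof.
  intros Hi Hy. pose proof (Q_upd (upd x i y) i (x i) Hi).
  rewrite upd_upd_same, upd_id, upd_at in H. apply H. rewrite Rabs_minus_sym; auto.
Qed.

Lemma Qn_upd x i y n : (i < 4)%nat -> Rabs (x i - y) <= 1 -> Q (upd x i y) ^ n <= 3 ^ n * Q x ^ n.
Proof. intros. rewrite <- Rpow_mult_distr. apply pow_incr. split.
  pose proof (Q_ge1 (upd x i y)); lra. apply Q_upd; auto. Qed.

Lemma Qn_upd' x i y n : (i < 4)%nat -> Rabs (x i - y) <= 1 -> Q x ^ n <= 3 ^ n * Q (upd x i y) ^ n.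
Proof. intros. rewrite <- Rpow_mult_distr. apply pow_incr. split.
  pose proof (Q_ge1 x); lra. apply Q_upd'; auto. Qed.

Definition bT : bv := fun _ => true.

Lemma Wb_ge x : / Q x ^ 4 <= Wb bT x.
Proof.
  unfold Wb, bT, wt, w.
  assert (forall t, 1 + t² <= Q x -> / Q x <= / (1 + t²)).
  { intros t Ht. apply Rinv_le_contravar; auto. pose proof (Rle_0_sqr t); lra. }
  pose proof (pow2_ge_0 (x 0%nat)). pose proof (pow2_ge_0 (x 1%nat)).
  pose proof (pow2_ge_0 (x 2%nat)). pose proof (pow2_ge_0 (x 3%nat)).
  assert (K0 : / Q x <= / (1 + (x 0%nat)²)) by (apply H; unfold Q, Rsqr; simpl in *; lra).
  assert (K1 : / Q x <= / (1 + (x 1%nat)²)) by (apply H; unfold Q, Rsqr; simpl in *; lra).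
  assert (K2 : / Q x <= / (1 + (x 2%nat)²)) by (apply H; unfold Q, Rsqr; simpl in *; lra).
  assert (K3 : / Q x <= / (1 + (x 3%nat)²)) by (apply H; unfold Q, Rsqr; simpl in *; lra).
  assert (Hq : 0 < / Q x) by (apply Rinv_0_lt_compat; pose proof (Q_ge1 x); lra).
  replace (/ Q x ^ 4) with (/ Q x * / Q x * / Q x * / Q x).
  2:{ rewrite <- pow_inv. simpl. ring. }
  repeat apply Rmult_le_compat; auto; try lra;
  repeat apply Rmult_le_pos; lra.
Qed.

Lemma Wb_ge' x i : / Q x ^ 4 <= Wb (bupd bT i false) x.
Proof. eapply Rle_trans. apply Wb_ge. apply Wb_bupd_le. Qed.

Lemma lipR (f df : R -> R) a b K :
  (forall c, is_derive f c (df c)) -> (forall c, Rabs (df c) <= K) ->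
  Rabs (f b - f a) <= K * Rabs (b - a).
Proof.
  intros Hd Hb. destruct (MVT_cor4 f df a (Rabs (b - a)) (fun c _ => Hd c) b (Rle_refl _)) as [c [Hc _]].
  rewrite Hc, Rabs_mult. apply Rmult_le_compat_r. apply Rabs_pos. auto.
Qed.

Lemma taylor2 (f f' f'' : R -> R) a b K :
  (forall c, is_derive f c (f' c)) -> (forall c, is_derive f' c (f'' c)) ->
  (forall c, Rabs (f'' c) <= K) ->
  Rabs (f b - f a - (b - a) * f' a) <= K * (b - a) ^ 2.
Proof.
  intros H1 H2 H3.
  assert (Hd : forall c, is_derive (fun s => f s - (s - a) * f' a) c (f' c - f' a)).
  { intros c. auto_derive. exists (f' c); apply H1.
    replace (Derive (fun x : R => f x) c) with (f' c) by (symmetry; apply is_derive_unique; apply H1). ring. }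
  destruct (MVT_cor4 _ _ a (Rabs (b - a)) (fun c _ => Hd c) b (Rle_refl _)) as [c [Hc Hca]].
  replace (f b - f a - (b - a) * f' a) with ((f b - (b - a) * f' a) - (f a - (a - a) * f' a)) by ring.
  rewrite Hc. rewrite Rabs_mult.
  pose proof (lipR f' f'' a c K H2 H3).
  rewrite <- (pow2_abs (b - a)). simpl.
  pose proof (Rabs_pos (f' c - f' a)). pose proof (Rabs_pos (b - a)). pose proof (Rabs_pos (c - a)).
  assert (0 <= K) by (pose proof (H3 0); pose proof (Rabs_pos (f'' 0)); lra).
  assert (Rabs (f' c - f' a) <= K * Rabs (b - a)).
  { eapply Rle_trans. exact H. apply Rmult_le_compat_l; auto. }
  replace (K * (Rabs (b - a) * (Rabs (b - a) * 1))) with (K * Rabs (b - a) * Rabs (b - a)) by ring.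
  apply Rmult_le_compat_r; auto.
Qed.


Lemma Cmod_sum (z : C) : Cmod z <= Rabs (fst z) + Rabs (snd z).
Proof.
  unfold Cmod. destruct z as [a b]; simpl.
  rewrite <- (sqrt_Rsqr (Rabs a + Rabs b)) by (pose proof (Rabs_pos a); pose proof (Rabs_pos b); lra).
  apply sqrt_le_1_alt. unfold Rsqr.
  assert (Ha : a * a = Rabs a * Rabs a) by (rewrite <- Rabs_mult, Rabs_pos_eq; nra).
  assert (Hb : b * b = Rabs b * Rabs b) by (rewrite <- Rabs_mult, Rabs_pos_eq; nra).
  simpl. rewrite !Rmult_1_r. rewrite Ha, Hb.
  pose proof (Rabs_pos a); pose proof (Rabs_pos b). nra.
Qed.

Lemma Cmod_cexpi a : Cmod (cexpi a) = 1.
Proof. unfold Cmod, cexpi; simpl. rewrite !Rmult_1_r.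
  replace (cos a * cos a + sin a * sin a) with 1. apply sqrt_1.
  pose proof (sin2_cos2 a). unfold Rsqr in H. lra. Qed.

Lemma Dcos c : is_derive cos c (- sin c).
Proof. auto_derive; auto. ring. Qed.
Lemma Dsin c : is_derive sin c (cos c).
Proof. auto_derive; auto. ring. Qed.
Lemma Dmcos c : is_derive (fun t => - cos t) c (sin c).
Proof. auto_derive; auto. ring. Qed.
Lemma Dmsin c : is_derive (fun t => - sin t) c (- cos c).
Proof. auto_derive; auto. ring. Qed.

Lemma cexpi_lip a b : Cmod (Cminus (cexpi a) (cexpi b)) <= 2 * Rabs (a - b).
Proof.
  eapply Rle_trans. apply Cmod_sum. unfold cexpi; simpl.
  pose proof (lipR cos (fun t => - sin t) b a 1 Dcos (fun c => ltac:(cbv beta; rewrite Rabs_Ropp; apply Rabs_le; apply SIN_bound))).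
  pose proof (lipR sin cos b a 1 Dsin (fun c => ltac:(cbv beta; apply Rabs_le; apply COS_bound))).
  unfold Rminus in *. lra.
Qed.

Lemma cexpi_rem a b :
  Cmod (Cminus (Cminus (cexpi a) (cexpi b)) (Cmult (Cmult Ci (RtoC (a - b))) (cexpi b))) <= 2 * (a - b) ^ 2.
Proof.
  eapply Rle_trans. apply Cmod_sum. unfold cexpi, Ci, RtoC; simpl.
  pose proof (taylor2 cos (fun t => - sin t) (fun t => - cos t) b a 1 Dcos Dmsin
    (fun c => ltac:(cbv beta; rewrite Rabs_Ropp; apply Rabs_le; apply COS_bound))).
  pose proof (taylor2 sin cos (fun t => - sin t) b a 1 Dsin Dcos
    (fun c => ltac:(cbv beta; rewrite Rabs_Ropp; apply Rabs_le; apply SIN_bound))).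
  replace (cos a + - cos b + - ((0 * (a - b) - 1 * 0) * cos b - (0 * 0 + 1 * (a - b)) * sin b))
    with (cos a - cos b - (a - b) * - sin b) by ring.
  replace (sin a + - sin b + - ((0 * (a - b) - 1 * 0) * sin b + (0 * 0 + 1 * (a - b)) * cos b))
    with (sin a - sin b - (a - b) * cos b) by ring.
  lra.
Qed.


Definition PB (F : pt -> C) (K : R) (n : nat) : Prop :=
  (forall x, Cmod (F x) <= K * Q x ^ n) /\
  (forall x i y, (i < 4)%nat -> Rabs (x i - y) <= 1 ->
     Cmod (Cminus (F x) (F (upd x i y))) <= K * Rabs (x i - y) * Q x ^ n).

Definition PBe F := exists K n, PB F K n.

Lemma PB_K F K n : PB F K n -> 0 <= K.
Proof. intros [H _]. pose proof (H (fun _ => 0)). pose proof (Cmod_ge_0 (F (fun _ => 0))).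
  pose proof (Qn_pos (fun _ => 0) n). destruct (Rle_or_lt 0 K); auto. nra. Qed.

Lemma KQ_mono K K' x n n' : 0 <= K -> K <= K' -> (n <= n')%nat -> K * Q x ^ n <= K' * Q x ^ n'.
Proof. intros. pose proof (Qn_mono x n n' H1). pose proof (Qn_pos x n). nra. Qed.

Lemma PB_mono F K n K' n' : PB F K n -> K <= K' -> (n <= n')%nat -> PB F K' n'.
Proof.
  intros HP HK Hn. pose proof (PB_K _ _ _ HP). destruct HP as [H1 H2]. split.
  - intros x. eapply Rle_trans. apply H1. apply KQ_mono; auto.
  - intros x i y Hi Hy. eapply Rle_trans. apply H2; auto.
    pose proof (KQ_mono K K' x n n' H HK Hn).
    replace (K * Rabs (x i - y) * Q x ^ n) with (Rabs (x i - y) * (K * Q x ^ n)) by ring.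
    replace (K' * Rabs (x i - y) * Q x ^ n') with (Rabs (x i - y) * (K' * Q x ^ n')) by ring.
    apply Rmult_le_compat_l; auto. apply Rabs_pos.
Qed.

Lemma PB_ext F G K n : PB F K n -> (forall x, F x = G x) -> PB G K n.
Proof. intros H E. rewrite (functional_extensionality F G E) in H. auto. Qed.

Lemma PBe_ext F G : PBe F -> (forall x, F x = G x) -> PBe G.
Proof. intros [K [n H]] E. exists K, n. eapply PB_ext; eauto. Qed.

Lemma Cmod_diff_split (a b c d : C) :
  Cmod (Cminus (Cmult a b) (Cmult c d)) <= Cmod (Cminus a c) * Cmod b + Cmod c * Cmod (Cminus b d).
Proof.
  replace (Cminus (Cmult a b) (Cmult c d)) with (Cplus (Cmult (Cminus a c) b) (Cmult c (Cminus b d))) by ring.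
  eapply Rle_trans. apply Cmod_triangle. rewrite !Cmod_mult. lra.
Qed.

Lemma PB_plus F G K K' n m : PB F K n -> PB G K' m ->
  PB (fun x => Cplus (F x) (G x)) (K + K') (n + m).
Proof.
  intros HF HG. pose proof (PB_K _ _ _ HF). pose proof (PB_K _ _ _ HG).
  destruct HF as [F1 F2], HG as [G1 G2]. split.
  - intros x. eapply Rle_trans. apply Cmod_triangle.
    pose proof (F1 x). pose proof (G1 x).
    pose proof (KQ_mono K K x n (n + m) H ltac:(lra) ltac:(lia)).
    pose proof (KQ_mono K' K' x m (n + m) H0 ltac:(lra) ltac:(lia)). lra.
  - intros x i y Hi Hy.
    replace (Cminus (Cplus (F x) (G x)) (Cplus (F (upd x i y)) (G (upd x i y))))
      with (Cplus (Cminus (F x) (F (upd x i y))) (Cminus (G x) (G (upd x i y)))) by ring.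
    eapply Rle_trans. apply Cmod_triangle.
    pose proof (F2 x i y Hi Hy). pose proof (G2 x i y Hi Hy).
    pose proof (KQ_mono K K x n (n + m) H ltac:(lra) ltac:(lia)).
    pose proof (KQ_mono K' K' x m (n + m) H0 ltac:(lra) ltac:(lia)).
    pose proof (Rabs_pos (x i - y)). nra.
Qed.

Lemma PB_mult F G K K' n m : PB F K n -> PB G K' m ->
  PB (fun x => Cmult (F x) (G x)) (K * K' * (1 + 3 ^ n)) (n + m).
Proof.
  intros HF HG. pose proof (PB_K _ _ _ HF). pose proof (PB_K _ _ _ HG).
  destruct HF as [F1 F2], HG as [G1 G2].
  assert (H3 : 1 <= 3 ^ n) by (apply pow_R1_Rle; lra).
  split.
  - intros x. rewrite Cmod_mult. rewrite pow_add.
    pose proof (F1 x). pose proof (G1 x). pose proof (Cmod_ge_0 (F x)). pose proof (Cmod_ge_0 (G x)).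
    pose proof (Qn_pos x n). pose proof (Qn_pos x m).
    assert (Cmod (F x) * Cmod (G x) <= (K * Q x ^ n) * (K' * Q x ^ m)) by (apply Rmult_le_compat; auto).
    assert (0 <= K * K' * Q x ^ n * Q x ^ m).
    { repeat apply Rmult_le_pos; lra. }
    nra.
  - intros x i y Hi Hy. eapply Rle_trans. apply Cmod_diff_split. rewrite pow_add.
    pose proof (F2 x i y Hi Hy). pose proof (G2 x i y Hi Hy). pose proof (G1 x).
    pose proof (F1 (upd x i y)). pose proof (Qn_upd x i y n Hi Hy).
    pose proof (Cmod_ge_0 (F (upd x i y))). pose proof (Cmod_ge_0 (G x)).
    pose proof (Cmod_ge_0 (Cminus (F x) (F (upd x i y)))).
    pose proof (Cmod_ge_0 (Cminus (G x) (G (upd x i y)))).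
    pose proof (Qn_pos x n). pose proof (Qn_pos x m). pose proof (Rabs_pos (x i - y)).
    set (d := Rabs (x i - y)) in *. set (A := Q x ^ n) in *. set (B := Q x ^ m) in *.
    assert (E1 : Cmod (Cminus (F x) (F (upd x i y))) * Cmod (G x) <= (K * d * A) * (K' * B))
      by (apply Rmult_le_compat; auto).
    assert (Cmod (F (upd x i y)) <= K * (3 ^ n * A)).
    { eapply Rle_trans; [exact H5|]. apply Rmult_le_compat_l; auto. }
    assert (E2 : Cmod (F (upd x i y)) * Cmod (Cminus (G x) (G (upd x i y))) <= (K * (3 ^ n * A)) * (K' * d * B))
      by (apply Rmult_le_compat; auto).
    assert (K * K' * (1 + 3 ^ n) * d * (A * B) = (K * d * A) * (K' * B) + (K * (3 ^ n * A)) * (K' * d * B)) by ring.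
    lra.
Qed.

Lemma PB_const c : PB (fun _ => c) (Cmod c) 0.
Proof. split.
  - intros x. simpl. lra.
  - intros x i y _ _. replace (Cminus c c) with (RtoC 0) by ring. rewrite Cmod_0.
    pose proof (Cmod_ge_0 c). pose proof (Rabs_pos (x i - y)). simpl. nra.
Qed.

Lemma abs_le_Q x j : (j < 4)%nat -> Rabs (x j) <= Q x.
Proof.
  intros Hj. assert (Rabs (x j) <= 1 + x j ^ 2).
  { pose proof (pow2_abs (x j)). pose proof (pow2_ge_0 (Rabs (x j) - 1)). 
    rewrite <- H. simpl in *. nra. }
  pose proof (pow2_ge_0 (x 0%nat)). pose proof (pow2_ge_0 (x 1%nat)).
  pose proof (pow2_ge_0 (x 2%nat)). pose proof (pow2_ge_0 (x 3%nat)).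
  destruct j as [|[|[|[|j]]]]; try lia; unfold Q; lra.
Qed.

Lemma PB_coord j : (j < 4)%nat -> PB (fun x => RtoC (x j)) 1 1.
Proof.
  intros Hj. split.
  - intros x. rewrite Cmod_R. rewrite pow_1, Rmult_1_l. apply abs_le_Q; auto.
  - intros x i y Hi Hy. rewrite pow_1.
    replace (Cminus (RtoC (x j)) (RtoC (upd x i y j))) with (RtoC (x j - upd x i y j)) by (unfold RtoC, Cminus, Cplus, Copp; simpl; f_equal; ring).
    rewrite Cmod_R. pose proof (Q_ge1 x). pose proof (Rabs_pos (x i - y)).
    unfold upd. destruct (Nat.eqb_spec j i).
    + subst. nra.
    + replace (x j - x j) with 0 by ring. rewrite Rabs_R0. nra.
Qed.

Lemma RtoC_minus a b : Cminus (RtoC a) (RtoC b) = RtoC (a - b).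
Proof. unfold RtoC, Cminus, Cplus, Copp; simpl; f_equal; ring. Qed.

Lemma PB_cexpi (th : pt -> R) K n : PB (fun x => RtoC (th x)) K n ->
  PB (fun x => cexpi (th x)) (1 + 2 * K) n.
Proof.
  intros HP. pose proof (PB_K _ _ _ HP). destruct HP as [_ H2]. split.
  - intros x. rewrite Cmod_cexpi. pose proof (Qn_ge1 x n). nra.
  - intros x i y Hi Hy. eapply Rle_trans. apply cexpi_lip.
    pose proof (H2 x i y Hi Hy). rewrite RtoC_minus, Cmod_R in H0.
    pose proof (Rabs_pos (x i - y)). pose proof (Qn_pos x n). nra.
Qed.


Definition SP (F F' : R -> pt -> C) (p0 K : R) (n : nat) : Prop :=
  (forall p, Rabs (p - p0) < 1 -> PB (F p) K n /\ PB (F' p) K n) /\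
  (forall p q x, Rabs (p - p0) < 1 -> Rabs (q - p0) < 1 ->
     Cmod (Cminus (F p x) (F q x)) <= K * Rabs (p - q) * Q x ^ n) /\
  (forall p q x, Rabs (p - p0) < 1 -> Rabs (q - p0) < 1 ->
     Cmod (Cminus (Cminus (F p x) (F q x)) (Cmult (RtoC (p - q)) (F' q x))) <= K * (p - q) ^ 2 * Q x ^ n).

Definition SPe F F' p0 := exists K n, SP F F' p0 K n.

Lemma SP_K F F' p0 K n : SP F F' p0 K n -> 0 <= K.
Proof. intros [H _]. destruct (H p0) as [H1 _]. rewrite Rminus_eq_0, Rabs_R0; lra.
  eapply PB_K; eauto. Qed.

Lemma SP_mono F F' p0 K n K' n' : SP F F' p0 K n -> K <= K' -> (n <= n')%nat -> SP F F' p0 K' n'.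
Proof.
  intros HS HK Hn. pose proof (SP_K _ _ _ _ _ HS). destruct HS as [H1 [H2 H3]]. split; [|split].
  - intros p Hp. destruct (H1 p Hp). split; eapply PB_mono; eauto.
  - intros p q x Hp Hq. eapply Rle_trans. apply H2; auto.
    pose proof (KQ_mono K K' x n n' H HK Hn).
    replace (K * Rabs (p - q) * Q x ^ n) with (Rabs (p - q) * (K * Q x ^ n)) by ring.
    replace (K' * Rabs (p - q) * Q x ^ n') with (Rabs (p - q) * (K' * Q x ^ n')) by ring.
    apply Rmult_le_compat_l; auto. apply Rabs_pos.
  - intros p q x Hp Hq. eapply Rle_trans. apply H3; auto.
    pose proof (KQ_mono K K' x n n' H HK Hn).
    replace (K * (p - q) ^ 2 * Q x ^ n) with ((p - q) ^ 2 * (K * Q x ^ n)) by ring.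
    replace (K' * (p - q) ^ 2 * Q x ^ n') with ((p - q) ^ 2 * (K' * Q x ^ n')) by ring.
    apply Rmult_le_compat_l; auto. apply pow2_ge_0.
Qed.

Lemma SP_ext F F' G G' p0 K n : SP F F' p0 K n ->
  (forall p x, F p x = G p x) -> (forall p x, F' p x = G' p x) -> SP G G' p0 K n.
Proof.
  intros H E1 E2.
  replace G with F by (apply functional_extensionality; intros p; apply functional_extensionality; auto).
  replace G' with F' by (apply functional_extensionality; intros p; apply functional_extensionality; auto).
  auto.
Qed.

Lemma SPe_ext F F' G G' p0 : SPe F F' p0 ->
  (forall p x, F p x = G p x) -> (forall p x, F' p x = G' p x) -> SPe G G' p0.
Proof. intros [K [n H]] E1 E2. exists K, n. eapply SP_ext; eauto. Qed.

Lemma SP_const F p0 : PBe F -> SPe (fun _ => F) (fun _ _ => RtoC 0) p0.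
Proof.
  intros [K [n H]]. pose proof (PB_K _ _ _ H). exists K, n. split; [|split].
  - intros p _. split; auto. eapply PB_mono. apply (PB_ext (fun _ => RtoC 0)). apply PB_const.
    auto. rewrite Cmod_0; auto. lia.
  - intros p q x _ _. replace (Cminus (F x) (F x)) with (RtoC 0) by ring. rewrite Cmod_0.
    pose proof (Rabs_pos (p - q)). pose proof (Qn_pos x n). apply Rmult_le_pos; [|lra]. nra.
  - intros p q x _ _. replace (Cminus (Cminus (F x) (F x)) (Cmult (RtoC (p - q)) (RtoC 0))) with (RtoC 0) by ring.
    rewrite Cmod_0. pose proof (pow2_ge_0 (p - q)). pose proof (Qn_pos x n). apply Rmult_le_pos; [|lra]. nra.
Qed.

Lemma SP_param p0 : SPe (fun p _ => RtoC p) (fun _ _ => RtoC 1) p0.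
Proof.
  exists (Rabs p0 + 2), 0%nat. split; [|split].
  - intros p Hp. split.
    + eapply PB_mono. apply (PB_const (RtoC p)). rewrite Cmod_R.
      pose proof (Rabs_triang_inv p p0). pose proof (Rabs_pos p0).
      pose proof (Rabs_triang (p - p0) p0). replace (p - p0 + p0) with p in H1 by ring. lra. lia.
    + eapply PB_mono. apply (PB_const (RtoC 1)). rewrite Cmod_R, Rabs_R1. pose proof (Rabs_pos p0). lra. lia.
  - intros p q x _ _. rewrite RtoC_minus, Cmod_R. simpl. pose proof (Rabs_pos p0). pose proof (Rabs_pos (p - q)). nra.
  - intros p q x _ _.
    replace (Cminus (Cminus (RtoC p) (RtoC q)) (Cmult (RtoC (p - q)) (RtoC 1))) with (RtoC 0)
      by (unfold RtoC, Cminus, Cplus, Copp, Cmult; simpl; f_equal; ring).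
    rewrite Cmod_0. pose proof (pow2_ge_0 (p - q)). pose proof (Rabs_pos p0). simpl. nra.
Qed.

Lemma SP_plus F F' G G' p0 : SPe F F' p0 -> SPe G G' p0 ->
  SPe (fun p x => Cplus (F p x) (G p x)) (fun p x => Cplus (F' p x) (G' p x)) p0.
Proof.
  intros [K [n [F1 [F2 F3]]]] [K' [m [G1 [G2 G3]]]].
  assert (HK : 0 <= K) by (eapply SP_K; split; eauto).
  assert (HK' : 0 <= K') by (eapply SP_K; split; eauto).
  exists (K + K'), (n + m)%nat. split; [|split].
  - intros p Hp. destruct (F1 p Hp), (G1 p Hp). split; apply PB_plus; auto.
  - intros p q x Hp Hq.
    replace (Cminus (Cplus (F p x) (G p x)) (Cplus (F q x) (G q x)))
      with (Cplus (Cminus (F p x) (F q x)) (Cminus (G p x) (G q x))) by ring.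
    eapply Rle_trans. apply Cmod_triangle.
    pose proof (F2 p q x Hp Hq). pose proof (G2 p q x Hp Hq).
    pose proof (KQ_mono K K x n (n + m) HK ltac:(lra) ltac:(lia)).
    pose proof (KQ_mono K' K' x m (n + m) HK' ltac:(lra) ltac:(lia)).
    pose proof (Rabs_pos (p - q)). nra.
  - intros p q x Hp Hq.
    replace (Cminus (Cminus (Cplus (F p x) (G p x)) (Cplus (F q x) (G q x))) (Cmult (RtoC (p - q)) (Cplus (F' q x) (G' q x))))
      with (Cplus (Cminus (Cminus (F p x) (F q x)) (Cmult (RtoC (p - q)) (F' q x)))
                  (Cminus (Cminus (G p x) (G q x)) (Cmult (RtoC (p - q)) (G' q x)))) by ring.
    eapply Rle_trans. apply Cmod_triangle.
    pose proof (F3 p q x Hp Hq). pose proof (G3 p q x Hp Hq).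
    pose proof (KQ_mono K K x n (n + m) HK ltac:(lra) ltac:(lia)).
    pose proof (KQ_mono K' K' x m (n + m) HK' ltac:(lra) ltac:(lia)).
    pose proof (pow2_ge_0 (p - q)). nra.
Qed.

Lemma SP_mult F F' G G' p0 : SPe F F' p0 -> SPe G G' p0 ->
  SPe (fun p x => Cmult (F p x) (G p x))
      (fun p x => Cplus (Cmult (F' p x) (G p x)) (Cmult (F p x) (G' p x))) p0.
Proof.
  intros [K [n [F1 [F2 F3]]]] [K' [m [G1 [G2 G3]]]].
  assert (HK : 0 <= K) by (eapply SP_K; split; eauto).
  assert (HK' : 0 <= K') by (eapply SP_K; split; eauto).
  assert (H3 : 1 <= 3 ^ n) by (apply pow_R1_Rle; lra).
  set (Kf := 2 * K * K' * (1 + 3 ^ n) + 3 * K * K').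
  assert (Kf1 : K * K' * (1 + 3 ^ n) <= Kf) by (unfold Kf; assert (0 <= K * K') by nra; nra).
  assert (Kf2 : K * K' * (1 + 3 ^ n) + K * K' * (1 + 3 ^ n) <= Kf) by (unfold Kf; assert (0 <= K * K') by nra; nra).
  assert (Kf3 : 3 * K * K' <= Kf) by (unfold Kf; assert (0 <= K * K') by nra; nra).
  exists Kf, (n + m + (n + m))%nat. split; [|split].
  - intros p Hp. destruct (F1 p Hp) as [PF PF'], (G1 p Hp) as [PG PG']. split.
    + eapply PB_mono. apply PB_mult; eauto. auto. lia.
    + eapply PB_mono. apply PB_plus; apply PB_mult; eauto. auto. lia.
  - intros p q x Hp Hq. eapply Rle_trans. apply Cmod_diff_split.
    destruct (F1 q Hq) as [[PF _] _]. destruct (G1 p Hp) as [[PG _] _].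
    pose proof (F2 p q x Hp Hq). pose proof (G2 p q x Hp Hq). pose proof (PF x). pose proof (PG x).
    pose proof (Cmod_ge_0 (F q x)). pose proof (Cmod_ge_0 (G p x)).
    pose proof (Cmod_ge_0 (Cminus (F p x) (F q x))). pose proof (Cmod_ge_0 (Cminus (G p x) (G q x))).
    pose proof (Qn_pos x n). pose proof (Qn_pos x m). pose proof (Rabs_pos (p - q)).
    set (d := Rabs (p - q)) in *. set (A := Q x ^ n) in *. set (B := Q x ^ m) in *.
    assert (E1 : Cmod (Cminus (F p x) (F q x)) * Cmod (G p x) <= (K * d * A) * (K' * B)) by (apply Rmult_le_compat; auto).
    assert (E2 : Cmod (F q x) * Cmod (Cminus (G p x) (G q x)) <= (K * A) * (K' * d * B)) by (apply Rmult_le_compat; auto).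
    pose proof (KQ_mono (2 * K * K') Kf x (n + m) (n + m + (n + m)) ltac:(nra) ltac:(nra) ltac:(lia)) as HKQ.
    rewrite (pow_add (Q x) n m) in HKQ. fold A B in HKQ.
    assert (Kf * d * Q x ^ (n + m + (n + m)) >= (2 * K * K' * (A * B)) * d) by nra.
    nra.
  - intros p q x Hp Hq.
    replace (Cminus (Cminus (Cmult (F p x) (G p x)) (Cmult (F q x) (G q x)))
        (Cmult (RtoC (p - q)) (Cplus (Cmult (F' q x) (G q x)) (Cmult (F q x) (G' q x)))))
      with (Cplus (Cplus (Cmult (Cminus (Cminus (F p x) (F q x)) (Cmult (RtoC (p - q)) (F' q x))) (G p x))
                         (Cmult (Cmult (RtoC (p - q)) (F' q x)) (Cminus (G p x) (G q x))))
                  (Cmult (F q x) (Cminus (Cminus (G p x) (G q x)) (Cmult (RtoC (p - q)) (G' q x))))) by ring.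
    eapply Rle_trans. apply Cmod_triangle. eapply Rle_trans. apply Rplus_le_compat_r. apply Cmod_triangle.
    rewrite !Cmod_mult, Cmod_R.
    destruct (F1 q Hq) as [[PF _] [PF' _]]. destruct (G1 p Hp) as [[PG _] _].
    pose proof (F3 p q x Hp Hq). pose proof (G3 p q x Hp Hq). pose proof (G2 p q x Hp Hq).
    pose proof (PF x). pose proof (PG x). pose proof (PF' x).
    pose proof (Cmod_ge_0 (F q x)). pose proof (Cmod_ge_0 (G p x)). pose proof (Cmod_ge_0 (F' q x)).
    pose proof (Cmod_ge_0 (Cminus (G p x) (G q x))).
    pose proof (Cmod_ge_0 (Cminus (Cminus (F p x) (F q x)) (Cmult (RtoC (p - q)) (F' q x)))).
    pose proof (Cmod_ge_0 (Cminus (Cminus (G p x) (G q x)) (Cmult (RtoC (p - q)) (G' q x)))).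
    pose proof (Qn_pos x n). pose proof (Qn_pos x m). pose proof (Rabs_pos (p - q)).
    assert (Hd2 : Rabs (p - q) * Rabs (p - q) = (p - q) ^ 2) by (rewrite <- pow2_abs; ring).
    set (d := Rabs (p - q)) in *. set (A := Q x ^ n) in *. set (B := Q x ^ m) in *. set (e := (p - q) ^ 2) in *.
    assert (E1 : Cmod (Cminus (Cminus (F p x) (F q x)) (Cmult (RtoC (p - q)) (F' q x))) * Cmod (G p x) <= (K * e * A) * (K' * B)) by (apply Rmult_le_compat; auto).
    assert (E2 : d * Cmod (F' q x) * Cmod (Cminus (G p x) (G q x)) <= d * (K * A) * (K' * d * B)).
    { apply Rmult_le_compat; auto. apply Rmult_le_pos; auto. apply Rmult_le_compat_l; auto. }
    assert (E3 : Cmod (F q x) * Cmod (Cminus (Cminus (G p x) (G q x)) (Cmult (RtoC (p - q)) (G' q x))) <= (K * A) * (K' * e * B)) by (apply Rmult_le_compat; auto).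
    pose proof (KQ_mono (3 * K * K') Kf x (n + m) (n + m + (n + m)) ltac:(nra) ltac:(nra) ltac:(lia)) as HKQ.
    rewrite (pow_add (Q x) n m) in HKQ. fold A B in HKQ.
    assert (0 <= e) by (unfold e; apply pow2_ge_0).
    assert (Kf * e * Q x ^ (n + m + (n + m)) >= (3 * K * K' * (A * B)) * e) by nra.
    assert (d * (K * A) * (K' * d * B) = K * K' * (A * B) * e) by (rewrite <- Hd2; ring).
    nra.
Qed.

Lemma Cmod_Ci : Cmod Ci = 1.
Proof. unfold Cmod, Ci; simpl. replace (0 * (0 * 1) + 1 * (1 * 1)) with 1 by ring. apply sqrt_1. Qed.

Lemma SP_cexpi (th th' : R -> pt -> R) p0 :
  SPe (fun p x => RtoC (th p x)) (fun p x => RtoC (th' p x)) p0 ->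
  SPe (fun p x => cexpi (th p x)) (fun p x => Cmult (Cmult Ci (RtoC (th' p x))) (cexpi (th p x))) p0.
Proof.
  intros [K [n HS]]. pose proof (SP_K _ _ _ _ _ HS) as HK. destruct HS as [S1 [S2 S3]].
  set (K2 := Cmod Ci * K * (1 + 3 ^ 0) * (1 + 2 * K) * (1 + 3 ^ (0 + n))).
  assert (HK2 : 0 <= K2).
  { unfold K2. rewrite Cmod_Ci. assert (1 <= 3 ^ (0 + n)) by (apply pow_R1_Rle; lra).
    assert (1 <= 3 ^ 0) by (apply pow_R1_Rle; lra). repeat apply Rmult_le_pos; lra. }
  set (Kf := (1 + 2 * K) + K2 + 2 * K + (2 * K * K + K)).
  exists Kf, (n + n)%nat. split; [|split].
  - intros p Hp. destruct (S1 p Hp) as [P1 P2]. split.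
    + eapply PB_mono. apply PB_cexpi. exact P1. unfold Kf; nra. lia.
    + eapply PB_mono. apply PB_mult. apply PB_mult. apply PB_const. exact P2. apply PB_cexpi. exact P1.
      unfold Kf; fold K2; nra. lia.
  - intros p q x Hp Hq. eapply Rle_trans. apply cexpi_lip.
    pose proof (S2 p q x Hp Hq) as H. rewrite RtoC_minus, Cmod_R in H.
    pose proof (KQ_mono (2 * K) Kf x n (n + n) ltac:(lra) ltac:(unfold Kf; nra) ltac:(lia)).
    pose proof (Rabs_pos (p - q)). nra.
  - intros p q x Hp Hq.
    set (a := th p x). set (b := th q x). set (t := th' q x). set (d := p - q).
    replace (Cminus (Cminus (cexpi a) (cexpi b)) (Cmult (RtoC d) (Cmult (Cmult Ci (RtoC t)) (cexpi b))))
      with (Cplus (Cminus (Cminus (cexpi a) (cexpi b)) (Cmult (Cmult Ci (RtoC (a - b))) (cexpi b)))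
                  (Cmult (Cmult Ci (Cminus (Cminus (RtoC a) (RtoC b)) (Cmult (RtoC d) (RtoC t)))) (cexpi b)))
      by (rewrite <- RtoC_minus; ring).
    eapply Rle_trans. apply Cmod_triangle.
    rewrite !Cmod_mult, Cmod_Ci, Cmod_cexpi.
    pose proof (cexpi_rem a b).
    pose proof (S3 p q x Hp Hq) as H3. fold a b t d in H3.
    pose proof (S2 p q x Hp Hq) as H2. fold a b d in H2. rewrite RtoC_minus, Cmod_R in H2.
    pose proof (Qn_pos x n) as HQ.
    assert (Hab : (a - b) ^ 2 <= K * K * d ^ 2 * (Q x ^ n * Q x ^ n)).
    { rewrite <- (pow2_abs (a - b)). rewrite <- (pow2_abs d).
      pose proof (Rabs_pos (a - b)). pose proof (Rabs_pos d). simpl. nra. }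
    rewrite <- pow_add in Hab.
    pose proof (Qn_mono x n (n + n) ltac:(lia)).
    pose proof (pow2_ge_0 d).
    assert (K * d ^ 2 * Q x ^ n <= K * d ^ 2 * Q x ^ (n + n)).
    { apply Rmult_le_compat_l; auto. nra. }
    assert ((2 * K * K + K) * d ^ 2 * Q x ^ (n + n) <= Kf * d ^ 2 * Q x ^ (n + n)).
    { apply Rmult_le_compat_r. pose proof (Qn_pos x (n + n)); lra. apply Rmult_le_compat_r; auto. unfold Kf; nra. }
    nra.
Qed.


Lemma hreal (g : R -> R) : schwartz1_R g ->
  exists M, 0 <= M /\ forall s t,
    Rabs (g s) <= M /\ Rabs (Derive g s) <= M /\ Rabs (g s - g t) <= M * Rabs (s - t) /\
    Rabs (Derive g s - Derive g t) <= M * Rabs (s - t) /\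
    Rabs (g s - g t - (s - t) * Derive g t) <= M * (s - t) ^ 2.
Proof.
  intros H. destruct (H 0%nat) as [D0 [M0 B0]]. destruct (H 1%nat) as [D1 [M1 B1]].
  destruct (H 2%nat) as [D2 [M2 B2]]. simpl in *.
  assert (B0' : forall x, Rabs (g x) <= M0) by (intros x; specialize (B0 x); lra).
  assert (B1' : forall x, Rabs (Derive g x) <= M1).
  { intros x. specialize (B1 x). change (Derive (fun x0 : R => g x0) x) with (Derive g x) in B1. pose proof (Rabs_pos (Derive g x)). pose proof (pow2_ge_0 x). simpl in *. nra. }
  assert (B2' : forall x, Rabs (Derive (Derive g) x) <= M2).
  { intros x. specialize (B2 x). change (Derive (fun x0 : R => Derive (fun x1 : R => g x1) x0) x) with (Derive (Derive g) x) in B2. pose proof (Rabs_pos (Derive (Derive g) x)). pose proof (pow2_ge_0 x).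
    assert (1 <= (1 + x * (x * 1)) * ((1 + x * (x * 1)) * 1)) by nra. simpl in *. nra. }
  assert (Dg : forall c, is_derive g c (Derive g c)) by (intros c; apply Derive_correct; apply D0).
  assert (Dg' : forall c, is_derive (Derive g) c (Derive (Derive g) c)) by (intros c; apply Derive_correct; apply D1).
  set (M := Rabs M0 + Rabs M1 + Rabs M2).
  pose proof (Rle_abs M0). pose proof (Rle_abs M1). pose proof (Rle_abs M2).
  pose proof (Rabs_pos M0). pose proof (Rabs_pos M1). pose proof (Rabs_pos M2).
  exists M. split. unfold M; lra. intros s t. split; [|split; [|split; [|split]]].
  - pose proof (B0' s). unfold M; lra.
  - pose proof (B1' s). unfold M; lra.
  - pose proof (lipR g (Derive g) t s M1 Dg B1'). pose proof (Rabs_pos (s - t)).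
    assert (M1 <= M) by (unfold M; lra). nra.
  - pose proof (lipR (Derive g) (Derive (Derive g)) t s M2 Dg' B2'). pose proof (Rabs_pos (s - t)).
    assert (M2 <= M) by (unfold M; lra). nra.
  - pose proof (taylor2 g (Derive g) (Derive (Derive g)) t s M2 Dg Dg' B2').
    pose proof (pow2_ge_0 (s - t)). assert (M2 <= M) by (unfold M; lra). nra.
Qed.

Lemma Cmod_minus_sum (a b : C) : Cmod (Cminus a b) <= Rabs (fst a - fst b) + Rabs (snd a - snd b).
Proof. eapply Rle_trans. apply Cmod_sum. simpl. unfold Rminus. lra. Qed.

Lemma SP_h (h : R -> C) p0 : schwartz1 h ->
  SPe (fun p x => h (p - x 0%nat)) (fun p x => Cderiv h (p - x 0%nat)) p0.
Proof.
  intros [H1 H2]. destruct (hreal _ H1) as [M1 [HM1 P1]]. destruct (hreal _ H2) as [M2 [HM2 P2]].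
  set (g1 := fun t => fst (h t)) in *. set (g2 := fun t => snd (h t)) in *.
  exists (M1 + M2), 0%nat. simpl.
  assert (Lx : forall (F : R -> C) x i y, (i < 4)%nat -> Rabs (x i - y) <= 1 ->
     (forall s t, Cmod (Cminus (F s) (F t)) <= (M1 + M2) * Rabs (s - t)) ->
     forall p, Cmod (Cminus (F (p - x 0%nat)) (F (p - upd x i y 0%nat))) <= (M1 + M2) * Rabs (x i - y) * 1).
  { intros F x i y Hi Hy HF p. rewrite Rmult_1_r. eapply Rle_trans. apply HF.
    unfold upd. destruct (Nat.eqb_spec 0 i).
    - subst. replace (p - x 0%nat - (p - y)) with (- (x 0%nat - y)) by ring. rewrite Rabs_Ropp. lra.
    - replace (p - x 0%nat - (p - x 0%nat)) with 0 by ring. rewrite Rabs_R0.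
      pose proof (Rabs_pos (x i - y)). nra. }
  assert (Lh : forall s t, Cmod (Cminus (h s) (h t)) <= (M1 + M2) * Rabs (s - t)).
  { intros s t. eapply Rle_trans. apply Cmod_minus_sum.
    destruct (P1 s t) as [_ [_ [A _]]]. destruct (P2 s t) as [_ [_ [B _]]]. fold g1 g2. lra. }
  assert (Lh' : forall s t, Cmod (Cminus (Cderiv h s) (Cderiv h t)) <= (M1 + M2) * Rabs (s - t)).
  { intros s t. eapply Rle_trans. apply Cmod_minus_sum. unfold Cderiv; simpl.
    destruct (P1 s t) as [_ [_ [_ [A _]]]]. destruct (P2 s t) as [_ [_ [_ [B _]]]]. fold g1 g2. lra. }
  split; [|split].
  - intros p _. split; split.
    + intros x. eapply Rle_trans. apply Cmod_sum.
      destruct (P1 (p - x 0%nat) 0) as [A _]. destruct (P2 (p - x 0%nat) 0) as [B _]. fold g1 g2. lra.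
    + intros x i y Hi Hy. apply Lx; auto.
    + intros x. eapply Rle_trans. apply Cmod_sum. unfold Cderiv; simpl.
      destruct (P1 (p - x 0%nat) 0) as [_ [A _]]. destruct (P2 (p - x 0%nat) 0) as [_ [B _]]. fold g1 g2. lra.
    + intros x i y Hi Hy. apply Lx; auto.
  - intros p q x _ _. rewrite Rmult_1_r. eapply Rle_trans. apply Lh.
    replace (p - x 0%nat - (q - x 0%nat)) with (p - q) by ring. lra.
  - intros p q x _ _. rewrite Rmult_1_r. eapply Rle_trans. apply Cmod_sum.
    destruct (P1 (p - x 0%nat) (q - x 0%nat)) as [_ [_ [_ [_ A]]]].
    destruct (P2 (p - x 0%nat) (q - x 0%nat)) as [_ [_ [_ [_ B]]]].
    replace (p - x 0%nat - (q - x 0%nat)) with (p - q) in A, B by ring.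
    unfold Cderiv, RtoC; simpl. unfold g1, g2 in *. simpl in A, B.
    set (P := p - x 0%nat) in *. set (Q' := q - x 0%nat) in *.
    set (a1 := fst (h P)) in *. set (b1 := fst (h Q')) in *. set (a2 := snd (h P)) in *. set (b2 := snd (h Q')) in *.
    set (d1 := Derive (fun t : R => fst (h t)) Q') in *. set (d2 := Derive (fun t : R => snd (h t)) Q') in *.
    replace (a1 + - b1 + - ((p - q) * d1 - 0 * d2)) with (a1 - b1 - (p - q) * d1) by ring.
    replace (a2 + - b2 + - ((p - q) * d2 + 0 * d1)) with (a2 - b2 - (p - q) * d2) by ring.
    lra.
Qed.


Definition c4 {T} (g : fun4 T) : pt -> T := fun x => g (x 0%nat) (x 1%nat) (x 2%nat) (x 3%nat).

Definition DecR (g : pt -> R) := forall n : nat, exists C, forall x,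
  Rabs (g x) * Q x ^ n <= C /\
  forall i y, (i < 4)%nat -> Rabs (x i - y) <= 1 -> Rabs (g x - g (upd x i y)) * Q x ^ n <= C * Rabs (x i - y).

Definition Dec (k : pt -> C) := forall n : nat, exists C, forall x,
  Cmod (k x) * Q x ^ n <= C /\
  forall i y, (i < 4)%nat -> Rabs (x i - y) <= 1 -> Cmod (Cminus (k x) (k (upd x i y))) * Q x ^ n <= C * Rabs (x i - y).

Lemma pd_deriv (g : fun4 R) (H : forall i a b c d, ex_pd i g a b c d) i z t : (i < 4)%nat ->
  is_derive (fun t => c4 g (upd z i t)) t (c4 (pd i g) (upd z i t)).
Proof.
  intros Hi. destruct i as [|[|[|[|i]]]]; try lia; unfold c4, upd; simpl;
  apply Derive_correct; [apply (H 0%nat) | apply (H 1%nat) | apply (H 2%nat) | apply (H 3%nat)].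
Qed.

Lemma Q_c4 x : Q x = 1 + x 0%nat ^ 2 + x 1%nat ^ 2 + x 2%nat ^ 2 + x 3%nat ^ 2.
Proof. reflexivity. Qed.

Lemma DecR_schwartz (g : fun4 R) : schwartz4_R g -> DecR (c4 g).
Proof.
  intros HS n. destruct (HS nil) as [Hex HM0]. simpl in Hex, HM0.
  destruct (HS (0%nat :: nil)) as [_ HR0]. destruct (HS (1%nat :: nil)) as [_ HR1].
  destruct (HS (2%nat :: nil)) as [_ HR2]. destruct (HS (3%nat :: nil)) as [_ HR3].
  destruct (HM0 n) as [M HM]. simpl in HR0, HR1, HR2, HR3.
  destruct (HR0 n) as [N0 HN0]. destruct (HR1 n) as [N1 HN1].
  destruct (HR2 n) as [N2 HN2]. destruct (HR3 n) as [N3 HN3].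
  assert (Hpd : forall i z, (i < 4)%nat -> Rabs (c4 (pd i g) z) * Q z ^ n <= Rabs N0 + Rabs N1 + Rabs N2 + Rabs N3).
  { intros i z Hi. pose proof (Rle_abs N0). pose proof (Rle_abs N1). pose proof (Rle_abs N2). pose proof (Rle_abs N3).
    pose proof (Rabs_pos N0). pose proof (Rabs_pos N1). pose proof (Rabs_pos N2). pose proof (Rabs_pos N3).
    destruct i as [|[|[|[|i]]]]; try lia; unfold c4; rewrite Rmult_comm.
    - specialize (HN0 (z 0%nat) (z 1%nat) (z 2%nat) (z 3%nat)). unfold Q. lra.
    - specialize (HN1 (z 0%nat) (z 1%nat) (z 2%nat) (z 3%nat)). unfold Q. lra.
    - specialize (HN2 (z 0%nat) (z 1%nat) (z 2%nat) (z 3%nat)). unfold Q. lra.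
    - specialize (HN3 (z 0%nat) (z 1%nat) (z 2%nat) (z 3%nat)). unfold Q. lra. }
  set (N := Rabs N0 + Rabs N1 + Rabs N2 + Rabs N3) in *.
  exists (M + 3 ^ n * N). intros x.
  assert (HN : 0 <= N) by (unfold N; pose proof (Rabs_pos N0); pose proof (Rabs_pos N1); pose proof (Rabs_pos N2); pose proof (Rabs_pos N3); lra).
  assert (H3 : 0 < 3 ^ n) by (apply pow_lt; lra).
  split.
  - specialize (HM (x 0%nat) (x 1%nat) (x 2%nat) (x 3%nat)). unfold c4. rewrite Rmult_comm.
    change (1 + x 0%nat ^ 2 + x 1%nat ^ 2 + x 2%nat ^ 2 + x 3%nat ^ 2) with (Q x) in HM. nra.
  - intros i y Hi Hy.
    assert (HD : forall c, Rabs (c - x i) <= Rabs (y - x i) -> is_derive (fun t => c4 g (upd x i t)) c (c4 (pd i g) (upd x i c)))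
      by (intros; apply pd_deriv; auto).
    destruct (MVT_cor4 _ _ (x i) (Rabs (y - x i)) HD y (Rle_refl _)) as [c [Hc Hca]].
    rewrite upd_id in Hc.
    replace (c4 g x - c4 g (upd x i y)) with (- (c4 g (upd x i y) - c4 g x)) by ring.
    rewrite Rabs_Ropp, Hc, Rabs_mult.
    pose proof (Hpd i (upd x i c) Hi).
    assert (Hxc : Rabs (x i - c) <= 1) by (rewrite Rabs_minus_sym; rewrite Rabs_minus_sym in Hy; lra).
    pose proof (Qn_upd' x i c n Hi Hxc).
    rewrite (Rabs_minus_sym y (x i)).
    pose proof (Rabs_pos (c4 (pd i g) (upd x i c))). pose proof (Rabs_pos (x i - y)).
    pose proof (Qn_pos x n). pose proof (Qn_pos (upd x i c) n).
    assert (Rabs (c4 (pd i g) (upd x i c)) * Q x ^ n <= 3 ^ n * N).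
    { eapply Rle_trans. apply Rmult_le_compat_l. auto. exact H0. nra. }
    assert (0 <= M).
    { specialize (HM 0 0 0 0). pose proof (Rabs_pos (g 0 0 0 0)). pose proof (pow_le (1 + 0^2 + 0^2 + 0^2 + 0^2) n). 
      assert (0 <= 1 + 0^2 + 0^2 + 0^2 + 0^2) by (simpl; lra). specialize (H8 H9). nra. }
    nra.
Qed.

Lemma Dec_schwartz (k : fun4 C) : schwartz4 k -> Dec (c4 k).
Proof.
  intros [H1 H2] n. destruct (DecR_schwartz _ H1 n) as [C1 P1]. destruct (DecR_schwartz _ H2 n) as [C2 P2].
  exists (C1 + C2). intros x. destruct (P1 x) as [A1 B1]. destruct (P2 x) as [A2 B2]. unfold c4 in *. split.
  - pose proof (Cmod_sum (k (x 0%nat) (x 1%nat) (x 2%nat) (x 3%nat))). pose proof (Qn_pos x n). nra.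
  - intros i y Hi Hy. specialize (B1 i y Hi Hy). specialize (B2 i y Hi Hy).
    pose proof (Cmod_minus_sum (k (x 0%nat) (x 1%nat) (x 2%nat) (x 3%nat))
      (k (upd x i y 0%nat) (upd x i y 1%nat) (upd x i y 2%nat) (upd x i y 3%nat))).
    pose proof (Qn_pos x n). nra.
Qed.


Notation CV := C_R_CompleteNormedModule.

Lemma normC (z : C) : norm (K := R_AbsRing) (V := CV) z = Cmod z.
Proof. rewrite Cmod_norm. reflexivity. Qed.

Lemma le_Wb Z A x : 0 <= A -> Z * Q x ^ 4 <= A -> Z <= A * Wb bT x.
Proof.
  intros HA H. pose proof (Wb_ge x). pose proof (Qn_pos x 4).
  apply Rmult_le_compat_r with (r := / Q x ^ 4) in H.
  rewrite Rmult_assoc, Rinv_r, Rmult_1_r in H by lra.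
  eapply Rle_trans. exact H. apply Rmult_le_compat_l; auto.
  left; apply Rinv_0_lt_compat; auto.
Qed.

Lemma kF_bounds (k F : pt -> C) K n C :
  PB F K n -> (forall x, Cmod (k x) * Q x ^ (n + 4) <= C /\
    forall i y, (i < 4)%nat -> Rabs (x i - y) <= 1 -> Cmod (Cminus (k x) (k (upd x i y))) * Q x ^ (n + 4) <= C * Rabs (x i - y)) ->
  forall x, Cmod (Cmult (k x) (F x)) * Q x ^ 4 <= K * C /\
    forall i y, (i < 4)%nat -> Rabs (x i - y) <= 1 ->
      Cmod (Cminus (Cmult (k x) (F x)) (Cmult (k (upd x i y)) (F (upd x i y)))) * Q x ^ 4
        <= (1 + 3 ^ (n + 4)) * C * K * Rabs (x i - y).
Proof.
  intros [F1 F2] Hk x. pose proof (PB_K _ _ _ (conj F1 F2)) as HK.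
  destruct (Hk x) as [k1 k2]. rewrite pow_add in k1.
  pose proof (Qn_pos x n). pose proof (Qn_pos x 4). pose proof (Cmod_ge_0 (k x)). pose proof (Cmod_ge_0 (F x)).
  split.
  - rewrite Cmod_mult. pose proof (F1 x).
    assert (Cmod (k x) * Cmod (F x) * Q x ^ 4 <= Cmod (k x) * (K * Q x ^ n) * Q x ^ 4).
    { apply Rmult_le_compat_r. lra. apply Rmult_le_compat_l; auto. }
    nra.
  - intros i y Hi Hy. eapply Rle_trans. apply Rmult_le_compat_r. lra. apply Cmod_diff_split.
    specialize (k2 i y Hi Hy). rewrite pow_add in k2.
    destruct (Hk (upd x i y)) as [k3 _].
    pose proof (Qn_upd' x i y (n + 4) Hi Hy) as HQ.
    pose proof (F1 x). pose proof (F2 x i y Hi Hy).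
    pose proof (Cmod_ge_0 (k (upd x i y))). pose proof (Cmod_ge_0 (Cminus (k x) (k (upd x i y)))).
    pose proof (Cmod_ge_0 (Cminus (F x) (F (upd x i y)))). pose proof (Rabs_pos (x i - y)).
    pose proof (Qn_pos (upd x i y) (n + 4)).
    assert (H3x : 0 < 3 ^ (n + 4)) by (apply pow_lt; lra).
    assert (E1 : Cmod (k (upd x i y)) * Q x ^ (n + 4) <= 3 ^ (n + 4) * C).
    { eapply Rle_trans. apply Rmult_le_compat_l. auto. exact HQ. nra. }
    rewrite pow_add in E1.
    assert (A1 : Cmod (Cminus (k x) (k (upd x i y))) * Cmod (F x) * Q x ^ 4 <= C * Rabs (x i - y) * K).
    { assert (Cmod (Cminus (k x) (k (upd x i y))) * Cmod (F x) * Q x ^ 4 <=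
              Cmod (Cminus (k x) (k (upd x i y))) * (K * Q x ^ n) * Q x ^ 4).
      { apply Rmult_le_compat_r. lra. apply Rmult_le_compat_l; auto. }
      nra. }
    assert (A2 : Cmod (k (upd x i y)) * Cmod (Cminus (F x) (F (upd x i y))) * Q x ^ 4 <= 3 ^ (n + 4) * C * (K * Rabs (x i - y))).
    { assert (Cmod (k (upd x i y)) * Cmod (Cminus (F x) (F (upd x i y))) * Q x ^ 4 <=
              Cmod (k (upd x i y)) * (K * Rabs (x i - y) * Q x ^ n) * Q x ^ 4).
      { apply Rmult_le_compat_r. lra. apply Rmult_le_compat_l; auto. }
      assert (0 <= K * Rabs (x i - y)) by nra.
      nra. }
    nra.
Qed.

Lemma rem_C (a b c : C) d : rem (V := CV) a b c d = Cminus (Cminus a b) (Cmult (RtoC d) c).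
Proof.
  destruct a as [a1 a2], b as [b1 b2], c as [c1 c2].
  unfold rem, minus, plus, opp, scal, Cminus, Cplus, Copp, Cmult, RtoC; simpl.
  unfold prod_plus, prod_opp, prod_scal; simpl.
  unfold plus, opp, mult; simpl. change (scal d c1) with (d * c1). change (scal d c2) with (d * c2). f_equal; ring.
Qed.

Lemma Good_of (k F : pt -> C) : Dec k -> PBe F ->
  exists M, Good (V := CV) M bT (fun x => Cmult (k x) (F x)).
Proof.
  intros Dk [K [n HP]]. destruct (Dk (n + 4)%nat) as [C HC].
  pose proof (kF_bounds k F K n C HP HC) as HB.
  pose proof (PB_K _ _ _ HP) as HK.
  assert (HC0 : 0 <= C).
  { destruct (HC (fun _ => 0)) as [A _]. pose proof (Cmod_ge_0 (k (fun _ => 0))).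
    pose proof (Qn_pos (fun _ => 0) (n + 4)). nra. }
  assert (H3 : 1 <= 3 ^ (n + 4)) by (apply pow_R1_Rle; lra).
  exists ((1 + 3 ^ (n + 4)) * C * K). split.
  - intros x. rewrite normC. destruct (HB x) as [A _]. apply le_Wb.
    repeat apply Rmult_le_pos; lra.
    eapply Rle_trans. exact A. assert (0 <= K * C) by nra. nra.
  - intros x i y Hi Hy. change (minus (Cmult (k x) (F x)) (Cmult (k (upd x i y)) (F (upd x i y))))
      with (Cminus (Cmult (k x) (F x)) (Cmult (k (upd x i y)) (F (upd x i y)))).
    rewrite normC. destruct (HB x) as [_ A]. specialize (A i y Hi Hy).
    eapply Rle_trans. apply le_Wb; [|exact A]. pose proof (Rabs_pos (x i - y)). repeat apply Rmult_le_pos; lra.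
    apply Rmult_le_compat_l. pose proof (Rabs_pos (x i - y)). repeat apply Rmult_le_pos; lra.
    apply Wb_bupd_le.
Qed.

Lemma GoodP_of (k : pt -> C) (F F' : R -> pt -> C) p0 : Dec k -> SPe F F' p0 ->
  exists M, GoodP (V := CV) M bT (fun p x => Cmult (k x) (F p x)) (fun p x => Cmult (k x) (F' p x)) p0.
Proof.
  intros Dk [K [n [S1 [S2 S3]]]]. destruct (Dk (n + 4)%nat) as [C HC].
  assert (HK : 0 <= K) by (eapply SP_K; split; eauto).
  assert (HC0 : 0 <= C).
  { destruct (HC (fun _ => 0)) as [A _]. pose proof (Cmod_ge_0 (k (fun _ => 0))).
    pose proof (Qn_pos (fun _ => 0) (n + 4)). nra. }
  assert (H3 : 1 <= 3 ^ (n + 4)) by (apply pow_R1_Rle; lra).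
  set (M := (1 + 3 ^ (n + 4)) * C * K).
  assert (HM0 : 0 <= M) by (unfold M; repeat apply Rmult_le_pos; lra).
  assert (HGood : forall G, PB G K n -> Good (V := CV) M bT (fun x => Cmult (k x) (G x))).
  { intros G HP. pose proof (kF_bounds k G K n C HP HC) as HB. split.
    - intros x. rewrite normC. destruct (HB x) as [A _]. apply le_Wb. auto.
      eapply Rle_trans. exact A. unfold M. assert (0 <= K * C) by nra. nra.
    - intros x i y Hi Hy. change (minus (Cmult (k x) (G x)) (Cmult (k (upd x i y)) (G (upd x i y))))
        with (Cminus (Cmult (k x) (G x)) (Cmult (k (upd x i y)) (G (upd x i y)))).
      rewrite normC. destruct (HB x) as [_ A]. specialize (A i y Hi Hy).
      eapply Rle_trans. apply le_Wb; [|exact A]. pose proof (Rabs_pos (x i - y)). repeat apply Rmult_le_pos; lra.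
      apply Rmult_le_compat_l. pose proof (Rabs_pos (x i - y)). unfold M. repeat apply Rmult_le_pos; lra.
      apply Wb_bupd_le. }
  exists M. split.
  - intros p Hp. destruct (S1 p Hp). split; apply HGood; auto.
  - intros p q x Hp Hq. rewrite rem_C, normC.
    replace (Cminus (Cminus (Cmult (k x) (F p x)) (Cmult (k x) (F q x))) (Cmult (RtoC (p - q)) (Cmult (k x) (F' q x))))
      with (Cmult (k x) (Cminus (Cminus (F p x) (F q x)) (Cmult (RtoC (p - q)) (F' q x)))) by ring.
    rewrite Cmod_mult. pose proof (S3 p q x Hp Hq) as A.
    destruct (HC x) as [B _]. rewrite pow_add in B.
    pose proof (Qn_pos x n). pose proof (Qn_pos x 4). pose proof (Cmod_ge_0 (k x)). pose proof (pow2_ge_0 (p - q)).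
    pose proof (Cmod_ge_0 (Cminus (Cminus (F p x) (F q x)) (Cmult (RtoC (p - q)) (F' q x)))).
    replace (M * (p - q) ^ 2 * Wb bT x) with ((M * (p - q) ^ 2) * Wb bT x) by ring.
    apply le_Wb. nra.
    assert (Cmod (k x) * Cmod (Cminus (Cminus (F p x) (F q x)) (Cmult (RtoC (p - q)) (F' q x))) * Q x ^ 4 <=
            Cmod (k x) * (K * (p - q) ^ 2 * Q x ^ n) * Q x ^ 4).
    { apply Rmult_le_compat_r. lra. apply Rmult_le_compat_l; auto. }
    assert (K * C * (p - q) ^ 2 <= M * (p - q) ^ 2).
    { apply Rmult_le_compat_r; auto. unfold M. assert (0 <= K * C) by nra. nra. }
    assert (Cmod (k x) * (K * (p - q) ^ 2 * Q x ^ n) * Q x ^ 4 = (Cmod (k x) * (Q x ^ n * Q x ^ 4)) * (K * (p - q) ^ 2)) by ring.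
    assert (0 <= K * (p - q) ^ 2) by nra.
    nra.
Qed.


Definition x0 : pt := fun _ => 0.
Definition NI (g : pt -> C) : C := J (V := CV) 0 (J (V := CV) 1 (J (V := CV) 2 (J (V := CV) 3 g))) x0.

Definition th (lam mu u : R) (x : pt) : R :=
  mu / (2 * lam) * x 1%nat - lam * x 3%nat + lam * x 2%nat * (u - x 0%nat) - lam / 2 * x 1%nat * (u - x 0%nat) ^ 2.

Lemma piF_NI lam mu k h u :
  piF lam mu k h u = NI (fun x => Cmult (Cmult (c4 k x) (cexpi (th lam mu u x))) (h (u - x 0%nat))).
Proof. reflexivity. Qed.

Definition b3 := bupd bT 3 false.
Definition b2 := bupd b3 2 false.
Definition b1 := bupd b2 1 false.
Definition b0 := bupd b1 0 false.

Lemma Wb_b0 x : Wb b0 x = 1.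
Proof. unfold Wb, b0, b1, b2, b3, bupd, bT, wt; simpl. ring. Qed.

Lemma Good4 M f : Good (V := CV) M bT f ->
  Good (PI * M) b3 (J 3 f) /\ Good (PI * (PI * M)) b2 (J 2 (J 3 f)) /\
  Good (PI * (PI * (PI * M))) b1 (J 1 (J 2 (J 3 f))).
Proof.
  intros H. assert (A : Good (PI * M) b3 (J 3 f)) by (apply Good_J; auto).
  assert (B : Good (PI * (PI * M)) b2 (J 2 (J 3 f))) by (apply Good_J; auto).
  assert (C' : Good (PI * (PI * (PI * M))) b1 (J 1 (J 2 (J 3 f)))) by (apply Good_J; auto).
  auto.
Qed.

Lemma NI_plus M M' f g : Good (V := CV) M bT f -> Good (V := CV) M' bT g ->
  NI (fun x => plus (f x) (g x)) = plus (NI f) (NI g).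
Proof.
  intros Hf Hg. destruct (Good4 _ _ Hf) as [F3 [F2 F1]]. destruct (Good4 _ _ Hg) as [G3 [G2 G1]].
  unfold NI.
  rewrite (J_plus M M' bT f g 3); auto.
  rewrite (J_plus _ _ b3 (J 3 f) (J 3 g) 2 ltac:(lia) eq_refl F3 G3).
  rewrite (J_plus _ _ b2 _ _ 1 ltac:(lia) eq_refl F2 G2).
  rewrite (J_plus _ _ b1 _ _ 0 ltac:(lia) eq_refl F1 G1).
  reflexivity.
Qed.

Lemma NI_cmult M f c : Good (V := CV) M bT f ->
  NI (fun x => Cmult c (f x)) = Cmult c (NI f).
Proof.
  intros Hf. destruct (Good4 _ _ Hf) as [F3 [F2 F1]].
  unfold NI.
  rewrite (J_cmult M bT f 3 c); auto.
  rewrite (J_cmult _ b3 (J 3 f) 2 c ltac:(lia) eq_refl F3).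
  rewrite (J_cmult _ b2 _ 1 c ltac:(lia) eq_refl F2).
  rewrite (J_cmult _ b1 _ 0 c ltac:(lia) eq_refl F1).
  reflexivity.
Qed.

Lemma im_le_Cmod (c : C) : Rabs (Im c) <= Cmod c.
Proof. eapply Rle_trans; [|apply Rmax_Cmod]. apply Rmax_r. Qed.

Lemma NI_deriv M (g g' : R -> pt -> C) p0 :
  GoodP (V := CV) M bT g g' p0 ->
  is_derive (fun p => fst (NI (g p))) p0 (fst (NI (g' p0))) /\
  is_derive (fun p => snd (NI (g p))) p0 (snd (NI (g' p0))).
Proof.
  intros H.
  apply (GoodP_J _ _ _ _ _ 3 ltac:(lia) eq_refl) in H.
  apply (GoodP_J _ _ _ _ _ 2 ltac:(lia) eq_refl) in H.
  apply (GoodP_J _ _ _ _ _ 1 ltac:(lia) eq_refl) in H.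
  apply (GoodP_J _ _ _ _ _ 0 ltac:(lia) eq_refl) in H.
  destruct H as [_ HR].
  assert (HR' : forall p, Rabs (p - p0) < 1 ->
    Cmod (Cminus (Cminus (NI (g p)) (NI (g p0))) (Cmult (RtoC (p - p0)) (NI (g' p0)))) <= PI * (PI * (PI * (PI * M))) * (p - p0) ^ 2).
  { intros p Hp. specialize (HR p p0 x0 Hp ltac:(rewrite Rminus_eq_0, Rabs_R0; lra)).
    rewrite rem_C, normC in HR. fold b3 b2 b1 b0 in HR. rewrite Wb_b0, Rmult_1_r in HR. exact HR. }
  split.
  - apply (deriv_from_rem (fun p => fst (NI (g p))) (fun p => fst (NI (g' p))) p0 (PI * (PI * (PI * (PI * M))))).
    intros p Hp. eapply Rle_trans; [|apply (HR' p Hp)]. eapply Rle_trans; [|apply re_le_Cmod].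
    right. f_equal. unfold Re, Cminus, Cplus, Copp, Cmult, RtoC; simpl. ring.
  - apply (deriv_from_rem (fun p => snd (NI (g p))) (fun p => snd (NI (g' p))) p0 (PI * (PI * (PI * (PI * M))))).
    intros p Hp. eapply Rle_trans; [|apply (HR' p Hp)]. eapply Rle_trans; [|apply im_le_Cmod].
    right. f_equal. unfold Im, Cminus, Cplus, Copp, Cmult, RtoC; simpl. ring.
Qed.


Lemma PBe_plus F G : PBe F -> PBe G -> PBe (fun x => Cplus (F x) (G x)).
Proof. intros [K [n H]] [K' [m H']]. eexists; eexists; apply PB_plus; eauto. Qed.
Lemma PBe_mult F G : PBe F -> PBe G -> PBe (fun x => Cmult (F x) (G x)).
Proof. intros [K [n H]] [K' [m H']]. eexists; eexists; apply PB_mult; eauto. Qed.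
Lemma PBe_const c : PBe (fun _ => c).
Proof. eexists; eexists; apply PB_const. Qed.
Lemma PBe_coord j : (j < 4)%nat -> PBe (fun x => RtoC (x j)).
Proof. intros; eexists; eexists; apply PB_coord; auto. Qed.
Lemma PBe_cexpi (t : pt -> R) : PBe (fun x => RtoC (t x)) -> PBe (fun x => cexpi (t x)).
Proof. intros [K [n H]]. eexists; eexists; apply PB_cexpi; eauto. Qed.

Ltac solve_PB := repeat first [ apply PBe_plus | apply PBe_mult | apply PBe_const | (apply PBe_coord; lia) ].
Ltac Ceq := intros; apply injective_projections; simpl; field; auto.

Definition D0 (u : R) (x : pt) : C := Cplus (RtoC u) (Cmult (RtoC (-1)) (RtoC (x 0%nat))).

Lemma PB_th lam mu u : lam <> 0 -> PBe (fun x => RtoC (th lam mu u x)).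
Proof.
  intros Hl.
  apply (PBe_ext (fun x => Cplus (Cplus (Cplus (Cmult (RtoC (mu / (2 * lam))) (RtoC (x 1%nat)))
       (Cmult (RtoC (- lam)) (RtoC (x 3%nat))))
       (Cmult (Cmult (RtoC lam) (RtoC (x 2%nat))) (D0 u x)))
       (Cmult (Cmult (RtoC (- lam / 2)) (RtoC (x 1%nat))) (Cmult (D0 u x) (D0 u x))))).
  - unfold D0. solve_PB.
  - unfold th, D0. Ceq.
Qed.

Lemma PBe_h (h : R -> C) u : schwartz1 h -> PBe (fun x => h (u - x 0%nat)) /\ PBe (fun x => Cderiv h (u - x 0%nat)).
Proof.
  intros Hh. destruct (SP_h h u Hh) as [K [n [S1 _]]].
  destruct (S1 u ltac:(rewrite Rminus_eq_0, Rabs_R0; lra)) as [A B].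
  split; exists K, n; auto.
Qed.

Lemma SP_thmu lam mu u : lam <> 0 ->
  SPe (fun p x => RtoC (th lam p u x)) (fun p x => RtoC (x 1%nat / (2 * lam))) mu.
Proof.
  intros Hl.
  assert (P1 : PBe (fun x => RtoC (x 1%nat / (2 * lam)))).
  { apply (PBe_ext (fun x => Cmult (RtoC (x 1%nat)) (RtoC (/ (2 * lam))))). solve_PB. unfold Rdiv. Ceq. }
  assert (P2 : PBe (fun x => RtoC (- lam * x 3%nat + lam * x 2%nat * (u - x 0%nat) - lam / 2 * x 1%nat * (u - x 0%nat) ^ 2))).
  { apply (PBe_ext (fun x => Cplus (Cplus (Cmult (RtoC (- lam)) (RtoC (x 3%nat)))
       (Cmult (Cmult (RtoC lam) (RtoC (x 2%nat))) (D0 u x)))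
       (Cmult (Cmult (RtoC (- lam / 2)) (RtoC (x 1%nat))) (Cmult (D0 u x) (D0 u x))))).
    unfold D0; solve_PB. unfold D0; Ceq. }
  eapply SPe_ext.
  - apply SP_plus. apply SP_mult. apply SP_param. apply (SP_const _ _ P1). apply (SP_const _ _ P2).
  - unfold th. Ceq.
  - Ceq.
Qed.

Lemma Cderiv_of (f : R -> C) (G' : C) p0 :
  is_derive (fun p => fst (f p)) p0 (fst G') -> is_derive (fun p => snd (f p)) p0 (snd G') ->
  Cderiv f p0 = G'.
Proof.
  intros H1 H2. unfold Cderiv.
  replace (Derive (fun t => fst (f t)) p0) with (fst G') by (symmetry; apply is_derive_unique; exact H1).
  replace (Derive (fun t => snd (f t)) p0) with (snd G') by (symmetry; apply is_derive_unique; exact H2).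
  destruct G'; auto.
Qed.

Lemma ident2 lam mu kappa h u : lam <> 0 -> schwartz4 kappa -> schwartz1 h ->
  DeltaX 2 lam mu kappa h u =
     Cmult (Cdiv (RtoC (2 * lam)) Ci)
       (Cderiv (fun m => piF lam m kappa h u) mu).
Proof.
  intros Hl Hk Hh.
  pose proof (Dec_schwartz _ Hk) as Dk.
  destruct (PBe_h h u Hh) as [Ph Ph'].
  pose proof (SP_cexpi _ _ mu (SP_thmu lam mu u Hl)) as SE.
  pose proof (SP_mult _ _ _ _ mu SE (SP_const _ mu Ph)) as SPhi.
  destruct (GoodP_of (c4 kappa) _ _ mu Dk SPhi) as [M GP].
  destruct (NI_deriv _ _ _ _ GP) as [D1 D2].
  assert (E : (fun m => piF lam m kappa h u) = (fun p => NI (fun x => Cmult (c4 kappa x)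
      (Cmult (cexpi (th lam p u x)) (h (u - x 0%nat)))))).
  { apply functional_extensionality; intros p. rewrite piF_NI. apply (f_equal NI).
    apply functional_extensionality; intros x. ring. }
  assert (HC : Cderiv (fun m => piF lam m kappa h u) mu = NI (fun x => Cmult (c4 kappa x)
      (Cplus (Cmult (Cmult (Cmult Ci (RtoC (x 1%nat / (2 * lam)))) (cexpi (th lam mu u x))) (h (u - x 0%nat)))
             (Cmult (cexpi (th lam mu u x)) (RtoC 0))))).
  { Time rewrite E. Time apply Cderiv_of; [exact D1 | exact D2]. }
  rewrite HC.
  pose (F2 := fun x => Cmult (RtoC (x 1%nat)) (Cmult (cexpi (th lam mu u x)) (h (u - x 0%nat)))).
  assert (PF2 : PBe F2).
  { unfold F2. apply PBe_mult. solve_PB. apply PBe_mult. apply PBe_cexpi. apply PB_th; auto. auto. }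
  destruct (Good_of _ _ Dk PF2) as [M2 G2].
  pose (c := Cmult Ci (RtoC (/ (2 * lam)))).
  transitivity (Cmult (Cdiv (RtoC (2 * lam)) Ci) (Cmult c (NI (fun x => Cmult (c4 kappa x) (F2 x))))).
  - unfold DeltaX. rewrite piF_NI.
    transitivity (NI (fun x => Cmult (c4 kappa x) (F2 x))).
    { apply (f_equal NI). apply functional_extensionality; intros x. unfold F2, c4, mulx. ring. }
    generalize (NI (fun x => Cmult (c4 kappa x) (F2 x))). intros z. unfold c. Ceq.
  - apply (f_equal (Cmult (Cdiv (RtoC (2 * lam)) Ci))). symmetry.
    transitivity (NI (fun x => Cmult c (Cmult (c4 kappa x) (F2 x)))).
    { apply (f_equal NI). apply functional_extensionality; intros x. unfold F2, c. Ceq. }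
    exact (NI_cmult _ _ c G2).
Qed.


Lemma Good_ext M b (f g : pt -> C) : Good (V := CV) M b f -> (forall x, @eq C (f x) (g x)) -> Good (V := CV) M b g.
Proof. intros H E. rewrite (functional_extensionality f g E) in H. auto. Qed.

Lemma NI_Cplus M M' (f g : pt -> C) : Good (V := CV) M bT f -> Good (V := CV) M' bT g ->
  NI (fun x => Cplus (f x) (g x)) = Cplus (NI f) (NI g).
Proof. intros Hf Hg. exact (NI_plus M M' f g Hf Hg). Qed.

Lemma SP_thu lam mu u : lam <> 0 ->
  SPe (fun p x => RtoC (th lam mu p x)) (fun p x => RtoC (lam * x 2%nat - lam * x 1%nat * (p - x 0%nat))) u.
Proof.
  intros Hl.
  assert (PA : PBe (fun x => RtoC (mu / (2 * lam) * x 1%nat - lam * x 3%nat))).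
  { apply (PBe_ext (fun x => Cplus (Cmult (RtoC (mu / (2 * lam))) (RtoC (x 1%nat))) (Cmult (RtoC (- lam)) (RtoC (x 3%nat))))).
    solve_PB. Ceq. }
  assert (PB' : PBe (fun x => RtoC (lam * x 2%nat))).
  { apply (PBe_ext (fun x => Cmult (RtoC lam) (RtoC (x 2%nat)))). solve_PB. Ceq. }
  assert (PC : PBe (fun x => RtoC (- x 0%nat))).
  { apply (PBe_ext (fun x => Cmult (RtoC (-1)) (RtoC (x 0%nat)))). solve_PB. Ceq. }
  assert (PD : PBe (fun x => RtoC (- lam / 2 * x 1%nat))).
  { apply (PBe_ext (fun x => Cmult (RtoC (- lam / 2)) (RtoC (x 1%nat)))). solve_PB. Ceq. }
  eapply SPe_ext.
  - apply SP_plus. apply SP_plus. apply (SP_const _ _ PA).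
    apply SP_mult. apply (SP_const _ _ PB'). apply SP_plus. apply SP_param. apply (SP_const _ _ PC).
    apply SP_mult. apply (SP_const _ _ PD).
    apply SP_mult; (apply SP_plus; [apply SP_param | apply (SP_const _ _ PC)]).
  - unfold th. Ceq.
  - Ceq.
Qed.

Lemma ident1 lam mu kappa h u : lam <> 0 -> schwartz4 kappa -> schwartz1 h ->
  DeltaX 3 lam mu kappa h u =
    Cmult (Cdiv Ci (RtoC lam))
      (Cminus
        (Cplus (DeltaX 2 lam mu kappa (piX3 lam h) u)
               (piF lam mu kappa (piX1 h) u))
        (piX1 (piF lam mu kappa h) u)).
Proof.
  intros Hl Hk Hh.
  pose proof (Dec_schwartz _ Hk) as Dk.
  destruct (PBe_h h u Hh) as [Ph Ph'].
  pose proof (SP_cexpi _ _ u (SP_thu lam mu u Hl)) as SE.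
  pose proof (SP_mult _ _ _ _ u SE (SP_h h u Hh)) as SPhi.
  destruct (GoodP_of (c4 kappa) _ _ u Dk SPhi) as [M GP].
  destruct (NI_deriv _ _ _ _ GP) as [D1 D2].
  assert (E : (fun p => piF lam mu kappa h p) = (fun p => NI (fun x => Cmult (c4 kappa x)
      (Cmult (cexpi (th lam mu p x)) (h (p - x 0%nat)))))).
  { apply functional_extensionality; intros p. rewrite piF_NI. apply (f_equal NI).
    apply functional_extensionality; intros x. ring. }
  pose proof (PBe_cexpi _ (PB_th lam mu u Hl)) as PE.
  pose (F3 := fun x => Cmult (RtoC (x 2%nat)) (Cmult (cexpi (th lam mu u x)) (h (u - x 0%nat)))).
  pose (F2 := fun x => Cmult (RtoC (x 1%nat)) (Cmult (cexpi (th lam mu u x)) (piX3 lam h (u - x 0%nat)))).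
  pose (FB := fun x => Cmult (cexpi (th lam mu u x)) (Cderiv h (u - x 0%nat))).
  pose (cl := Cmult Ci (RtoC lam)).
  assert (P3 : PBe F3) by (unfold F3; apply PBe_mult; [solve_PB | apply PBe_mult; auto]).
  assert (P2 : PBe F2).
  { apply (PBe_ext (fun x => Cmult (RtoC (x 1%nat)) (Cmult (cexpi (th lam mu u x))
        (Cmult (Cmult Ci (Cmult (RtoC (- lam)) (D0 u x))) (h (u - x 0%nat)))))).
    apply PBe_mult. solve_PB. apply PBe_mult. auto. apply PBe_mult. unfold D0; solve_PB. auto.
    intros x. unfold F2, piX3, D0. Ceq. }
  assert (PBB : PBe FB) by (unfold FB; apply PBe_mult; auto).
  destruct (Good_of _ _ Dk P3) as [M3 G3].
  destruct (Good_of _ _ Dk P2) as [M2 G2].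
  destruct (Good_of _ _ Dk PBB) as [MB GB].
  assert (Pc3 : PBe (fun x => Cmult cl (F3 x))) by (apply PBe_mult; [apply PBe_const | auto]).
  destruct (Good_of _ _ Dk Pc3) as [Mc3 Gc3].
  assert (Gc3' : Good (V := CV) Mc3 bT (fun x => Cmult cl (Cmult (c4 kappa x) (F3 x)))).
  { eapply Good_ext. exact Gc3. intros x. cbv beta. ring. }
  assert (Ps : PBe (fun x => Cplus (Cmult cl (F3 x)) (F2 x))) by (apply PBe_plus; auto).
  destruct (Good_of _ _ Dk Ps) as [Ms Gs].
  assert (Gs' : Good (V := CV) Ms bT (fun x => Cplus (Cmult cl (Cmult (c4 kappa x) (F3 x))) (Cmult (c4 kappa x) (F2 x)))).
  { eapply Good_ext. exact Gs. intros x. cbv beta. ring. }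
  pose (z3 := NI (fun x => Cmult (c4 kappa x) (F3 x))).
  pose (z2 := NI (fun x => Cmult (c4 kappa x) (F2 x))).
  pose (zB := NI (fun x => Cmult (c4 kappa x) (FB x))).
  assert (H3 : DeltaX 3 lam mu kappa h u = z3).
  { unfold DeltaX. rewrite piF_NI. apply (f_equal NI). apply functional_extensionality; intros x.
    unfold F3, c4, mulx. ring. }
  assert (H2 : DeltaX 2 lam mu kappa (piX3 lam h) u = z2).
  { unfold DeltaX. rewrite piF_NI. apply (f_equal NI). apply functional_extensionality; intros x.
    unfold F2, c4, mulx. ring. }
  assert (HB : piF lam mu kappa (piX1 h) u = zB).
  { rewrite piF_NI. apply (f_equal NI). apply functional_extensionality; intros x.
    unfold FB, piX1. ring. }
  assert (HD : piX1 (piF lam mu kappa h) u = Cplus (Cplus (Cmult cl z3) z2) zB).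
  { unfold piX1. change (piF lam mu kappa h) with (fun p => piF lam mu kappa h p). rewrite E.
    transitivity (NI (fun x => Cmult (c4 kappa x)
      (Cplus (Cmult (Cmult (Cmult Ci (RtoC (lam * x 2%nat - lam * x 1%nat * (u - x 0%nat)))) (cexpi (th lam mu u x))) (h (u - x 0%nat)))
             (Cmult (cexpi (th lam mu u x)) (Cderiv h (u - x 0%nat)))))).
    { apply Cderiv_of; [exact D1 | exact D2]. }
    transitivity (NI (fun x => Cplus (Cplus (Cmult cl (Cmult (c4 kappa x) (F3 x))) (Cmult (c4 kappa x) (F2 x))) (Cmult (c4 kappa x) (FB x)))).
    { apply (f_equal NI). apply functional_extensionality; intros x.
      unfold F3, F2, FB, cl, piX3. Ceq. }
    rewrite (NI_Cplus _ _ _ _ Gs' GB).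
    rewrite (NI_Cplus _ _ _ _ Gc3' G2).
    rewrite (NI_cmult _ _ cl G3).
    reflexivity. }
  rewrite H3, H2, HB, HD. clearbody z3 z2 zB. unfold cl. Ceq.
Qed.


Theorem mainTheorem3 (lam mu : R) (kappa : fun4 C) (h : R -> C) (u : R) :
  lam <> 0 -> schwartz4 kappa -> schwartz1 h ->
  DeltaX 3 lam mu kappa h u =
    Cmult (Cdiv Ci (RtoC lam))
      (Cminus
        (Cplus (DeltaX 2 lam mu kappa (piX3 lam h) u)
               (piF lam mu kappa (piX1 h) u))
        (piX1 (piF lam mu kappa h) u))
  /\ DeltaX 2 lam mu kappa h u =
     Cmult (Cdiv (RtoC (2 * lam)) Ci)
       (Cderiv (fun m => piF lam m kappa h u) mu).
Proof.
  intros Hl Hk Hh. split.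
  - apply ident1; auto.
  - apply ident2; auto.
Qed.
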